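(* Let $f=(f_1,f_2):\mathbb{R}\times\mathbb{R}^2,\mathbf 0\to\mathbb{R}^2,\mathbf 0$ be an analytic germ, $f_t(x)=f(t,x)$, $J=\partial(f_1,f_2)/\partial(x_1,x_2)$, $F_i=\partial(f_i,J)/\partial(x_1,x_2)$, and assume $$\dim_{\mathbb{R}}\mathcal{O}_3/\langle t,f_1,f_2\rangle<\infty,\ \dim_{\mathbb{R}}\mathcal{O}_3/\langle t,F_1,F_2\rangle<\infty,\ J(\mathbf{0})=0,\ \dim_{\mathbb{R}}\mathcal{O}_3/\langle t,\partial J/\partial x_1,\partial J/\partial x_2\rangle<\infty,$$ and that $V(I')=\{\mathbf 0\}$, where $I'=\langle J,F_1,F_2,\partial(F_1,J)/\partial(x_1,x_2),\partial(F_2,J)/\partial(x_1,x_2)\rangle$. Let $r_0>0$ with $f_0^{-1}(\mathbf 0)\cap D^2(r_0)=\{\mathbf 0\}$, $\tilde D^2_t(\delta)=f_t^{-1}(D^2(\delta))\cap D^2(r_0)$, let $V(I)$ be a representative of the zero germ of $I=\langle J,F_1,F_2\rangle$, and $\Sigma_t=\{x\in\tilde D^2_t(\delta):(t,x)\in V(I)\}$. Suppose $0<\delta\ll1$ and $t\neq0$ is sufficiently close to zero. Then the set of critical points of $f_t:\tilde D^2_t(\delta)\to D^2(\delta)$ consists of fold points and the finite family $\Sigma_t$ of cusp points.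
   Context: $\mathcal{O}_3=\mathbb{R}\{t,x_1,x_2\}$; $V(\cdot)$ denotes real zero sets near the origin. $D^2(\rho)$ is the closed disc of radius $\rho$. Fold and cusp points are in Whitney's sense. *)

(* Defs.v *)
From Stdlib Require Import Reals List.
From Coquelicot Require Import Coquelicot.
Open Scope R_scope.

Definition fn3 := R -> R -> R -> R.

Definition near0 (P : R -> R -> R -> Prop) : Prop :=
  exists e, 0 < e /\ forall t x1 x2,
    Rabs t < e -> Rabs x1 < e -> Rabs x2 < e -> P t x1 x2.

(* Degree-n homogeneous part of the power series sum a_{ijk} t^i x1^j x2^k. *)
Definition homog3 (a : nat -> nat -> nat -> R) (t x1 x2 : R) (n : nat) : R :=
  sum_f_R0 (fun i => sum_f_R0 (fun j =>
     a i j (n - i - j)%nat * t ^ i * x1 ^ j * x2 ^ (n - i - j)) (n - i)) n.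

(* g is (a representative of) an element of O_3 = R{t,x1,x2}:
   g is given near 0 by an absolutely convergent power series. *)
Definition analytic0 (g : fn3) : Prop :=
  exists (a : nat -> nat -> nat -> R) (r : R), 0 < r /\
    forall t x1 x2, Rabs t < r -> Rabs x1 < r -> Rabs x2 < r ->
      ex_series (homog3 (fun i j k => Rabs (a i j k)) (Rabs t) (Rabs x1) (Rabs x2))
      /\ is_series (homog3 a t x1 x2) (g t x1 x2).

Fixpoint lcomb (cs : list R) (hs : list fn3) (t x1 x2 : R) : R :=
  match cs, hs with
  | c :: cs', h :: hs' => c * h t x1 x2 + lcomb cs' hs' t x1 x2
  | _, _ => 0
  end.
Fixpoint icomb (qs gs : list fn3) (t x1 x2 : R) : R :=
  match qs, gs with
  | q :: qs', g :: gs' => q t x1 x2 * g t x1 x2 + icomb qs' gs' t x1 x2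
  | _, _ => 0
  end.

(* dim_R O_3 / <gs> < infinity : finitely many germs hs span the quotient,
   i.e. every germ g is congruent modulo the ideal <gs> to an R-linear
   combination of the hs (equality of germs at the origin). *)
Definition finite_codim (gs : list fn3) : Prop :=
  exists hs : list fn3, List.Forall analytic0 hs /\
    forall g, analytic0 g ->
      exists (cs : list R) (qs : list fn3),
        length cs = length hs /\ length qs = length gs /\ List.Forall analytic0 qs /\
        near0 (fun t x1 x2 => g t x1 x2 = lcomb cs hs t x1 x2 + icomb qs gs t x1 x2).

Definition tcoord : fn3 := fun t _ _ => t.

Definition dx1 (g : fn3) : fn3 := fun t x1 x2 => Derive (fun y => g t y x2) x1.
Definition dx2 (g : fn3) : fn3 := fun t x1 x2 => Derive (fun y => g t x1 y) x2.
Definition jac (g h : fn3) : fn3 :=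
  fun t x1 x2 => dx1 g t x1 x2 * dx2 h t x1 x2 - dx2 g t x1 x2 * dx1 h t x1 x2.

Definition inD (r x1 x2 : R) : Prop := x1 ^ 2 + x2 ^ 2 <= r ^ 2.

Definition pd1 (g : R -> R -> R) : R -> R -> R := fun x1 x2 => Derive (fun y => g y x2) x1.
Definition pd2 (g : R -> R -> R) : R -> R -> R := fun x1 x2 => Derive (fun y => g x1 y) x2.
Definition jac2 (g h : R -> R -> R) : R -> R -> R :=
  fun x1 x2 => pd1 g x1 x2 * pd2 h x1 x2 - pd2 g x1 x2 * pd1 h x1 x2.

Definition critical_pt (g1 g2 : R -> R -> R) (x1 x2 : R) : Prop :=
  jac2 g1 g2 x1 x2 = 0.

Definition good_pt (g1 g2 : R -> R -> R) (x1 x2 : R) : Prop :=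
  critical_pt g1 g2 x1 x2 /\
  ~ (pd1 (jac2 g1 g2) x1 x2 = 0 /\ pd2 (jac2 g1 g2) x1 x2 = 0).

(* Whitney fold point: good, and the derivative of g along the critical curve
   (direction field (J_x2, -J_x1)), i.e. (d(g1,J)/d(x1,x2), d(g2,J)/d(x1,x2)),
   is nonzero. *)
Definition fold_pt (g1 g2 : R -> R -> R) (x1 x2 : R) : Prop :=
  good_pt g1 g2 x1 x2 /\
  ~ (jac2 g1 (jac2 g1 g2) x1 x2 = 0 /\ jac2 g2 (jac2 g1 g2) x1 x2 = 0).

(* Whitney cusp point: good, the first derivative of g along the critical curve
   vanishes and the second one does not. *)
Definition cusp_pt (g1 g2 : R -> R -> R) (x1 x2 : R) : Prop :=
  let J := jac2 g1 g2 in
  good_pt g1 g2 x1 x2 /\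
  jac2 g1 J x1 x2 = 0 /\ jac2 g2 J x1 x2 = 0 /\
  ~ (jac2 (jac2 g1 J) J x1 x2 = 0 /\ jac2 (jac2 g2 J) J x1 x2 = 0).

(* Main.v *)
Require Import Defs.
From Stdlib Require Import Reals List.
From Coquelicot Require Import Coquelicot.
From Stdlib Require Import Lra Lia Psatz Ranalysis5 Classical ClassicalEpsilon.
Open Scope R_scope.

Definition absc (a : nat -> nat -> nat -> R) : nat -> nat -> nat -> R :=
  fun i j k => Rabs (a i j k).
Definition d1c (a : nat -> nat -> nat -> R) : nat -> nat -> nat -> R :=
  fun i j k => INR (S j) * a i (S j) k.
Definition d2c (a : nat -> nat -> nat -> R) : nat -> nat -> nat -> R :=
  fun i j k => INR (S k) * a i j (S k).

Lemma homog3_nonneg a s n : 0 <= s -> 0 <= homog3 (absc a) s s s n.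
Proof.
  intros hs. unfold homog3. apply cond_pos_sum; intro i.
  apply cond_pos_sum; intro j. unfold absc.
  apply Rmult_le_pos; [apply Rmult_le_pos; [apply Rmult_le_pos|]|];
    try apply pow_le; auto; apply Rabs_pos.
Qed.

Lemma homog3_abs_le a t x1 x2 s n :
  Rabs t <= s -> Rabs x1 <= s -> Rabs x2 <= s ->
  Rabs (homog3 a t x1 x2 n) <= homog3 (absc a) s s s n.
Proof.
  intros ht h1 h2. unfold homog3.
  eapply Rle_trans; [apply sum_f_R0_triangle|]. apply sum_Rle; intros i _.
  eapply Rle_trans; [apply sum_f_R0_triangle|]. apply sum_Rle; intros j _.
  unfold absc. rewrite !Rabs_mult, <- !RPow_abs.
  assert (0 <= Rabs t) by apply Rabs_pos.
  assert (0 <= Rabs x1) by apply Rabs_pos.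
  assert (0 <= Rabs x2) by apply Rabs_pos.
  repeat apply Rmult_le_compat; try apply Rabs_pos; try apply pow_le; auto;
    try apply Rmult_le_pos; try apply Rmult_le_pos; try apply Rabs_pos; try apply pow_le; auto;
    try apply pow_incr; auto; lra.
Qed.

Lemma homog3_hom b s n : homog3 b s s s n = s ^ n * homog3 b 1 1 1 n.
Proof.
  unfold homog3. rewrite scal_sum. apply sum_eq; intros i hi.
  rewrite (Rmult_comm (sum_f_R0 _ _)), scal_sum. apply sum_eq; intros j hj.
  rewrite !pow1.
  replace n with (i + j + (n - i - j))%nat at 4 by lia.
  rewrite !pow_add. ring.
Qed.

Lemma d1c_bound a n :
  homog3 (absc (d1c a)) 1 1 1 n <= INR (S n) * homog3 (absc a) 1 1 1 (S n).
Proof.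
  unfold homog3. rewrite (tech5 _ n).
  rewrite Rmult_plus_distr_l.
  apply Rle_trans with (INR (S n) * sum_f_R0 (fun i : nat =>
    sum_f_R0 (fun j : nat => absc a i j (S n - i - j) * 1 ^ i * 1 ^ j * 1 ^ (S n - i - j)) (S n - i)) n + 0).
  2:{ apply Rplus_le_compat_l. apply Rmult_le_pos; [apply pos_INR|].
      apply cond_pos_sum; intro j. unfold absc. rewrite !pow1. rewrite !Rmult_1_r. apply Rabs_pos. }
  rewrite Rplus_0_r, scal_sum. apply sum_Rle; intros i hi.
  idtac.
  replace (S n - i)%nat with (S (n - i)) by lia.
  rewrite (decomp_sum _ (S (n - i))) by lia. simpl pred.
  assert (0 <= absc a i 0 (S (n - i) - 0) * 1 ^ i * 1 ^ 0 * 1 ^ (S (n - i) - 0)).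
  { unfold absc; rewrite !pow1, !Rmult_1_r; apply Rabs_pos. }
  rewrite Rmult_plus_distr_r.
  apply Rle_trans with (0 + sum_f_R0 (fun i0 : nat =>
     absc a i (S i0) (S (n - i) - S i0) * 1 ^ i * 1 ^ S i0 * 1 ^ (S (n - i) - S i0)) (n - i) * INR (S n)).
  2:{ apply Rplus_le_compat_r. apply Rmult_le_pos; auto. apply pos_INR. }
  rewrite Rplus_0_l, Rmult_comm, scal_sum. apply sum_Rle; intros j hj.
  unfold absc, d1c. rewrite !pow1, !Rmult_1_r.
  replace (S (n - i) - S j)%nat with (n - i - j)%nat by lia.
  rewrite Rabs_mult, Rabs_right by (apply Rle_ge, pos_INR).
  rewrite Rmult_comm. apply Rmult_le_compat_l; [apply Rabs_pos|].
  apply le_INR; lia.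
Qed.

Lemma d2c_bound a n :
  homog3 (absc (d2c a)) 1 1 1 n <= INR (S n) * homog3 (absc a) 1 1 1 (S n).
Proof.
  unfold homog3. rewrite (tech5 _ n).
  rewrite Rmult_plus_distr_l.
  apply Rle_trans with (INR (S n) * sum_f_R0 (fun i : nat =>
    sum_f_R0 (fun j : nat => absc a i j (S n - i - j) * 1 ^ i * 1 ^ j * 1 ^ (S n - i - j)) (S n - i)) n + 0).
  2:{ apply Rplus_le_compat_l. apply Rmult_le_pos; [apply pos_INR|].
      apply cond_pos_sum; intro j. unfold absc. rewrite !pow1. rewrite !Rmult_1_r. apply Rabs_pos. }
  rewrite Rplus_0_r, scal_sum. apply sum_Rle; intros i hi.
  replace (S n - i)%nat with (S (n - i)) by lia.
  rewrite (tech5 _ (n - i)).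
  rewrite Rmult_plus_distr_r.
  apply Rle_trans with (sum_f_R0 (fun j : nat =>
     absc a i j (S (n - i) - j) * 1 ^ i * 1 ^ j * 1 ^ (S (n - i) - j)) (n - i) * INR (S n) + 0).
  2:{ apply Rplus_le_compat_l. apply Rmult_le_pos; [|apply pos_INR].
      unfold absc; rewrite !pow1, !Rmult_1_r; apply Rabs_pos. }
  rewrite Rplus_0_r, Rmult_comm, scal_sum. apply sum_Rle; intros j hj.
  unfold absc, d2c. rewrite !pow1, !Rmult_1_r.
  replace (S (n - i) - j)%nat with (S (n - i - j)) by lia.
  rewrite Rabs_mult, Rabs_right by (apply Rle_ge, pos_INR).
  rewrite Rmult_comm. apply Rmult_le_compat_l; [apply Rabs_pos|].
  apply le_INR; lia.
Qed.

Lemma is_derive_eq_l (f : R -> R) (x l l' : R) : is_derive f x l -> l = l' -> is_derive f x l'.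
Proof. intros H <-; exact H. Qed.

Lemma is_derive_sum (F : nat -> R -> R) (F' : nat -> R) y n :
  (forall m, (m <= n)%nat -> is_derive (F m) y (F' m)) ->
  is_derive (fun z => sum_f_R0 (fun m => F m z) n) y (sum_f_R0 F' n).
Proof.
  induction n as [|n IH]; intros H; simpl.
  - apply H; lia.
  - apply (is_derive_plus (fun z => sum_f_R0 (fun m => F m z) n) (F (S n))).
    + apply IH; intros; apply H; lia.
    + apply H; lia.
Qed.

Lemma deriv1_0 a t x2 z : is_derive (fun y => homog3 a t y x2 0) z 0.
Proof.
  unfold homog3; simpl. auto_derive; auto; ring.
Qed.

Lemma deriv2_0 a t x1 z : is_derive (fun y => homog3 a t x1 y 0) z 0.
Proof.
  unfold homog3; simpl. auto_derive; auto; ring.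
Qed.

Ltac kill_last := match goal with |- ?A + ?B = _ => let HB := fresh in
  assert (HB : B = 0); [ | rewrite HB, Rplus_0_r ] end.

Lemma deriv1_S a t x2 z m :
  is_derive (fun y => homog3 a t y x2 (S m)) z (homog3 (d1c a) t z x2 m).
Proof.
  unfold homog3.
  eapply is_derive_eq_l.
  { apply is_derive_sum with (F' := fun i => sum_f_R0 (fun j =>
      a i j (S m - i - j)%nat * t ^ i * (INR j * z ^ pred j) * x2 ^ (S m - i - j)) (S m - i)).
    intros i _. apply is_derive_sum. intros j _.
    set (k := (S m - i - j)%nat). auto_derive; auto. ring. }
  rewrite tech5. kill_last.
  { replace (S m - S m)%nat with 0%nat by lia. simpl. ring. }
  apply sum_eq; intros i hi.
  replace (S m - i)%nat with (S (m - i)) by lia.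
  rewrite (decomp_sum _ (S (m - i))) by lia.
  match goal with |- ?A + ?B = _ => let HB := fresh in
    assert (HB : A = 0); [ simpl; ring | rewrite HB, Rplus_0_l ] end.
  simpl pred.
  apply sum_eq; intros j hj. unfold d1c.
  replace (S (m - i) - S j)%nat with (m - i - j)%nat by lia. simpl pred. ring.
Qed.

Lemma deriv2_S a t x1 z m :
  is_derive (fun y => homog3 a t x1 y (S m)) z (homog3 (d2c a) t x1 z m).
Proof.
  unfold homog3.
  eapply is_derive_eq_l.
  { apply is_derive_sum with (F' := fun i => sum_f_R0 (fun j =>
      a i j (S m - i - j)%nat * t ^ i * x1 ^ j * (INR (S m - i - j) * z ^ pred (S m - i - j))) (S m - i)).
    intros i _. apply is_derive_sum. intros j _.
    set (k := (S m - i - j)%nat). auto_derive; auto. ring. }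
  rewrite tech5. kill_last.
  { replace (S m - S m)%nat with 0%nat by lia. simpl. ring. }
  apply sum_eq; intros i hi.
  replace (S m - i)%nat with (S (m - i)) by lia.
  rewrite tech5. kill_last.
  { replace (S (m - i) - S (m - i))%nat with 0%nat by lia. simpl. ring. }
  apply sum_eq; intros j hj. unfold d2c.
  replace (S (m - i) - j)%nat with (S (m - i - j)) by lia. simpl pred. ring.
Qed.

Lemma series_nonneg_le (b : nat -> R) n :
  (forall m, 0 <= b m) -> ex_series b -> sum_f_R0 b n <= Series b.
Proof.
  intros hb he. rewrite (Series_incr_n b (S n)) by (auto; lia). simpl pred.
  assert (0 <= Series (fun k => b (S n + k)%nat)).
  { assert (E : Series (fun k => 0 * b k) = 0) by (rewrite Series_scal_l; ring).
    rewrite <- E. apply Series_le; [intros; rewrite Rmult_0_l; split; [lra| apply hb]|].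
    now apply ex_series_incr_n. }
  lra.
Qed.

Lemma series_abs_le (b B : nat -> R) :
  (forall m, Rabs (b m) <= B m) -> ex_series B -> Rabs (Series b) <= Series B.
Proof.
  intros hb he.
  assert (hA : ex_series (fun n => Rabs (b n))).
  { apply (@ex_series_le R_AbsRing R_CompleteNormedModule _ B); auto. intros n. change (norm (Rabs (b n))) with (Rabs (Rabs (b n))). rewrite Rabs_Rabsolu; auto. }
  eapply Rle_trans; [apply Series_Rabs; auto|].
  apply Series_le; auto. intros n; split; [apply Rabs_pos| auto].
Qed.

Lemma exs_le (b B : nat -> R) :
  (forall m, Rabs (b m) <= B m) -> ex_series B -> ex_series b.
Proof.
  intros hb he. apply ex_series_Rabs.
  apply (@ex_series_le R_AbsRing R_CompleteNormedModule _ B); auto. intros n.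
  change (norm (Rabs (b n))) with (Rabs (Rabs (b n))). rewrite Rabs_Rabsolu; auto.
Qed.

Lemma tail_bound (b B : nat -> R) n :
  (forall m, Rabs (b m) <= B m) -> ex_series B ->
  Rabs (Series b - sum_f_R0 b n) <= Series B - sum_f_R0 B n.
Proof.
  intros hb he.
  assert (eb : ex_series b) by (eapply exs_le; eauto).
  rewrite (Series_incr_n b (S n)) by (auto; lia).
  rewrite (Series_incr_n B (S n)) by (auto; lia). simpl pred.
  replace (sum_f_R0 b n + Series (fun k : nat => b (S n + k)%nat) - sum_f_R0 b n)
    with (Series (fun k : nat => b (S n + k)%nat)) by ring.
  replace (sum_f_R0 B n + Series (fun k : nat => B (S n + k)%nat) - sum_f_R0 B n)
    with (Series (fun k : nat => B (S n + k)%nat)) by ring.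
  apply series_abs_le; auto. now apply ex_series_incr_n.
Qed.

Lemma tail_small (B : nat -> R) : ex_series B ->
  forall eps, 0 < eps -> exists N, forall n, (N <= n)%nat -> Series B - sum_f_R0 B n < eps.
Proof.
  intros he eps heps.
  pose proof (Series_correct _ he) as H. apply is_series_Reals in H.
  destruct (H eps heps) as [N HN]. exists N; intros n hn.
  specialize (HN n hn). unfold Rdist in HN.
  rewrite Rabs_minus_sym in HN. apply Rabs_def2 in HN. lra.
Qed.

Lemma cont_sum (F : nat -> R -> R) y n :
  (forall m, continuity_pt (F m) y) -> continuity_pt (fun z => sum_f_R0 (fun m => F m z) n) y.
Proof.
  intros H; induction n; simpl.
  - apply H.
  - apply (continuity_pt_plus (fun z => sum_f_R0 (fun m => F m z) n) (F (S n))); auto.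
Qed.

Lemma series_deriv (H H' : nat -> R -> R) (B : nat -> R) (f : R -> R) (s x : R) :
  0 < s -> Rabs x < s ->
  (forall y, Rabs y < s -> is_series (fun n => H n y) (f y)) ->
  (forall y, is_derive (H 0%nat) y 0) ->
  (forall m y, is_derive (H (S m)) y (H' m y)) ->
  (forall m y, Rabs y < s -> Rabs (H' m y) <= B m) -> ex_series B ->
  (forall m y, continuity_pt (H' m) y) ->
  is_derive f x (Series (fun m => H' m x)).
Proof.
  intros hs hx hser hd0 hdS hB heB hc.
  set (r := mkposreal s hs).
  apply is_derive_Reals.
  apply (derivable_pt_lim_CVU (fun n y => sum_f_R0 (fun k => H k y) (S n))
           (fun n y => sum_f_R0 (fun k => H' k y) n) f
           (fun y => Series (fun m => H' m y)) x 0 r).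
  - unfold Boule; simpl. rewrite Rminus_0_r; auto.
  - intros y n _. apply is_derive_Reals.
    apply (is_derive_ext (fun z => H 0%nat z + sum_f_R0 (fun k => H (S k) z) n)).
    { intros z. rewrite (decomp_sum (fun k => H k z) (S n)) by lia. reflexivity. }
    eapply is_derive_eq_l.
    + apply (is_derive_plus (H 0%nat) (fun z => sum_f_R0 (fun k => H (S k) z) n)).
      * apply hd0.
      * apply is_derive_sum with (F := fun k => H (S k)) (F' := fun k => H' k y).
        intros; apply hdS.
    + simpl. change (plus 0 (sum_f_R0 (fun k => H' k y) n) = sum_f_R0 (fun k : nat => H' k y) n).
      unfold plus; simpl. ring.
  - intros y hy. unfold Boule in hy; simpl in hy; rewrite Rminus_0_r in hy.
    pose proof (hser y hy) as Hs. apply is_series_Reals in Hs.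
    intros eps heps. destruct (Hs eps heps) as [N HN]. exists N. intros n hn.
    apply HN. lia.
  - intros eps heps. destruct (tail_small B heB eps heps) as [N HN].
    exists N. intros n y hn hy. unfold Boule in hy; simpl in hy; rewrite Rminus_0_r in hy.
    eapply Rle_lt_trans; [apply (tail_bound (fun m => H' m y) B n)|]; auto.
  - intros y hy.
    apply (CVU_continuity (fun n y => sum_f_R0 (fun k => H' k y) n)
             (fun y => Series (fun m => H' m y)) 0 r); auto.
    + intros eps heps. destruct (tail_small B heB eps heps) as [N HN].
      exists N. intros n z hn hz. unfold Boule in hz; simpl in hz; rewrite Rminus_0_r in hz.
      eapply Rle_lt_trans; [apply (tail_bound (fun m => H' m z) B n)|]; auto.
    + intros n z _. apply cont_sum. auto.
Qed.

Definition box (r t x1 x2 : R) : Prop := Rabs t < r /\ Rabs x1 < r /\ Rabs x2 < r.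
Definition coef_ok (rho : R) a : Prop :=
  forall s, 0 <= s < rho -> ex_series (homog3 (absc a) s s s).
Definition ana (rho : R) (g : fn3) : Prop :=
  exists a, coef_ok rho a /\
    forall t x1 x2, box rho t x1 x2 -> is_series (homog3 a t x1 x2) (g t x1 x2).

Lemma coef_radius rho a s : coef_ok rho a -> 0 <= s < rho ->
  Rbar_lt s (CV_radius (fun n => homog3 (absc a) 1 1 1 n)).
Proof.
  intros hc hs. set (s' := (s + rho) / 2).
  assert (hs' : 0 <= s' < rho) by (unfold s'; lra).
  pose proof (hc s' hs') as he.
  destruct (CV_radius_bounded (fun n => homog3 (absc a) 1 1 1 n)) as [Hub _].
  assert (Rbar_le s' (CV_radius (fun n => homog3 (absc a) 1 1 1 n))).
  { apply Hub. exists (Series (homog3 (absc a) s' s' s')). intros n.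
    rewrite Rmult_comm, <- homog3_hom.
    rewrite Rabs_pos_eq by (apply homog3_nonneg; lra).
    eapply Rle_trans; [|apply (series_nonneg_le _ n)]; auto.
    - destruct n as [|n]; [right; reflexivity|].
      change (sum_f_R0 (homog3 (absc a) s' s' s') (S n)) with
        (sum_f_R0 (homog3 (absc a) s' s' s') n + homog3 (absc a) s' s' s' (S n)).
      pose proof (cond_pos_sum (homog3 (absc a) s' s' s') n (fun m => homog3_nonneg a s' m ltac:(lra))).
      lra.
    - intros; apply homog3_nonneg; lra. }
  destruct (CV_radius (fun n => homog3 (absc a) 1 1 1 n)) as [l| |]; simpl in *; auto; try (unfold s' in *; lra).
Qed.

Lemma psd_ex rho a s : coef_ok rho a -> 0 <= s < rho ->
  ex_series (fun n => s ^ n * (INR (S n) * homog3 (absc a) 1 1 1 (S n))).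
Proof.
  intros hc hs. pose proof (ex_pseries_derive (fun n => homog3 (absc a) 1 1 1 n) s) as H.
  assert (Rbar_lt (Rabs s) (CV_radius (fun n => homog3 (absc a) 1 1 1 n))).
  { rewrite Rabs_pos_eq by lra. eapply coef_radius; eauto. }
  specialize (H H0). unfold ex_pseries in H.
  eapply ex_series_ext; [|exact H]. intros n. simpl.
  rewrite pow_n_pow. unfold PS_derive. reflexivity.
Qed.

Lemma coef_d1 rho a : coef_ok rho a -> coef_ok rho (d1c a).
Proof.
  intros hc s hs.
  apply (@ex_series_le R_AbsRing R_CompleteNormedModule (homog3 (absc (d1c a)) s s s) (fun n => s ^ n * (INR (S n) * homog3 (absc a) 1 1 1 (S n)))); [|eapply psd_ex; eauto].
  intros n. change (norm (homog3 (absc (d1c a)) s s s n)) with (Rabs (homog3 (absc (d1c a)) s s s n)).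
  rewrite Rabs_pos_eq by (apply homog3_nonneg; lra).
  rewrite homog3_hom. apply Rmult_le_compat_l; [apply pow_le; lra|]. apply d1c_bound.
Qed.

Lemma coef_d2 rho a : coef_ok rho a -> coef_ok rho (d2c a).
Proof.
  intros hc s hs.
  apply (@ex_series_le R_AbsRing R_CompleteNormedModule (homog3 (absc (d2c a)) s s s) (fun n => s ^ n * (INR (S n) * homog3 (absc a) 1 1 1 (S n)))); [|eapply psd_ex; eauto].
  intros n. change (norm (homog3 (absc (d2c a)) s s s n)) with (Rabs (homog3 (absc (d2c a)) s s s n)).
  rewrite Rabs_pos_eq by (apply homog3_nonneg; lra).
  rewrite homog3_hom. apply Rmult_le_compat_l; [apply pow_le; lra|]. apply d2c_bound.
Qed.

Lemma coef_lip rho a s : coef_ok rho a -> 0 <= s < rho ->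
  ex_series (fun n => INR n * homog3 (absc a) s s s n).
Proof.
  intros hc hs. apply ex_series_incr_1.
  pose proof (psd_ex rho a s hc hs) as H.
  apply (ex_series_scal_l s) in H.
  eapply ex_series_ext; [|exact H]. intros n. simpl.
  unfold scal; simpl; unfold mult; simpl.
  rewrite (homog3_hom _ s (S n)). simpl pow. ring.
Qed.

Lemma coef_mono rho rho' a : rho' <= rho -> coef_ok rho a -> coef_ok rho' a.
Proof. intros h hc s hs. apply hc. lra. Qed.

Lemma ana_mono rho rho' g : 0 < rho' <= rho -> ana rho g -> ana rho' g.
Proof.
  intros h [a [hc hs]]. exists a. split; [eapply coef_mono; eauto; lra|].
  intros t x1 x2 [h1 [h2 h3]]. apply hs. repeat split; lra.
Qed.

Lemma analytic0_ana g : analytic0 g -> exists rho, 0 < rho /\ ana rho g.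
Proof.
  intros [a [r [hr H]]]. exists r. split; auto. exists a. split.
  - intros s hs. destruct (H s s s) as [H1 _]; try (rewrite Rabs_pos_eq; lra).
    rewrite Rabs_pos_eq in H1 by lra. exact H1.
  - intros t x1 x2 [h1 [h2 h3]]. apply H; auto.
Qed.

Lemma cont_homog1 a t x2 m y : continuity_pt (fun z => homog3 a t z x2 m) y.
Proof.
  apply derivable_continuous_pt. destruct m as [|m].
  - exists 0. apply is_derive_Reals, deriv1_0.
  - exists (homog3 (d1c a) t y x2 m). apply is_derive_Reals, deriv1_S.
Qed.

Lemma cont_homog2 a t x1 m y : continuity_pt (fun z => homog3 a t x1 z m) y.
Proof.
  apply derivable_continuous_pt. destruct m as [|m].
  - exists 0. apply is_derive_Reals, deriv2_0.
  - exists (homog3 (d2c a) t x1 y m). apply is_derive_Reals, deriv2_S.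
Qed.

Definition M3 t x1 x2 := Rmax (Rabs t) (Rmax (Rabs x1) (Rabs x2)).

Lemma M3_facts t x1 x2 : Rabs t <= M3 t x1 x2 /\ Rabs x1 <= M3 t x1 x2 /\ Rabs x2 <= M3 t x1 x2
  /\ 0 <= M3 t x1 x2.
Proof.
  unfold M3. pose proof (Rmax_l (Rabs t) (Rmax (Rabs x1) (Rabs x2))).
  pose proof (Rmax_r (Rabs t) (Rmax (Rabs x1) (Rabs x2))).
  pose proof (Rmax_l (Rabs x1) (Rabs x2)). pose proof (Rmax_r (Rabs x1) (Rabs x2)).
  pose proof (Rabs_pos t). repeat split; lra.
Qed.

Lemma M3_box rho t x1 x2 : box rho t x1 x2 -> M3 t x1 x2 < rho.
Proof.
  intros [h1 [h2 h3]]. unfold M3. apply Rmax_lub_lt; auto. apply Rmax_lub_lt; auto.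
Qed.

Lemma ana_d1 rho g : ana rho g ->
  ana rho (dx1 g) /\
  (forall t x1 x2, box rho t x1 x2 -> is_derive (fun y => g t y x2) x1 (dx1 g t x1 x2)).
Proof.
  intros [a [hc hs]].
  assert (KEY : forall t x1 x2, box rho t x1 x2 ->
    ex_series (homog3 (d1c a) t x1 x2) /\
    is_derive (fun y => g t y x2) x1 (Series (homog3 (d1c a) t x1 x2))).
  { intros t x1 x2 hb. pose proof (M3_box _ _ _ _ hb) as hM.
    destruct (M3_facts t x1 x2) as [f1 [f2 [f3 f4]]].
    set (s := (M3 t x1 x2 + rho) / 2).
    assert (hs0 : 0 <= s < rho) by (unfold s; lra).
    split.
    - apply (exs_le _ (homog3 (absc (d1c a)) s s s)); [|apply coef_d1 with rho; auto].
      intros m. apply homog3_abs_le; unfold s; lra.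
    - apply (series_deriv (fun n y => homog3 a t y x2 n) (fun m y => homog3 (d1c a) t y x2 m)
           (homog3 (absc (d1c a)) s s s) (fun y => g t y x2) s x1).
      + unfold s; lra.
      + unfold s; lra.
      + intros y hy. apply hs. destruct hb as [h1 [h2 h3]]. repeat split; unfold s in *; lra.
      + intros y; apply deriv1_0.
      + intros m y; apply deriv1_S.
      + intros m y hy. apply homog3_abs_le; unfold s in *; lra.
      + apply coef_d1 with rho; auto.
      + intros m y. apply cont_homog1. }
  assert (EQ : forall t x1 x2, box rho t x1 x2 -> dx1 g t x1 x2 = Series (homog3 (d1c a) t x1 x2)).
  { intros t x1 x2 hb. unfold dx1. apply is_derive_unique. apply KEY; auto. }
  split.
  - exists (d1c a). split; [apply coef_d1; auto|].
    intros t x1 x2 hb. rewrite EQ by auto. apply Series_correct. apply KEY; auto.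
  - intros t x1 x2 hb. rewrite EQ by auto. apply KEY; auto.
Qed.

Lemma ana_d2 rho g : ana rho g ->
  ana rho (dx2 g) /\
  (forall t x1 x2, box rho t x1 x2 -> is_derive (fun y => g t x1 y) x2 (dx2 g t x1 x2)).
Proof.
  intros [a [hc hs]].
  assert (KEY : forall t x1 x2, box rho t x1 x2 ->
    ex_series (homog3 (d2c a) t x1 x2) /\
    is_derive (fun y => g t x1 y) x2 (Series (homog3 (d2c a) t x1 x2))).
  { intros t x1 x2 hb. pose proof (M3_box _ _ _ _ hb) as hM.
    destruct (M3_facts t x1 x2) as [f1 [f2 [f3 f4]]].
    set (s := (M3 t x1 x2 + rho) / 2).
    assert (hs0 : 0 <= s < rho) by (unfold s; lra).
    split.
    - apply (exs_le _ (homog3 (absc (d2c a)) s s s)); [|apply coef_d2 with rho; auto].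
      intros m. apply homog3_abs_le; unfold s; lra.
    - apply (series_deriv (fun n y => homog3 a t x1 y n) (fun m y => homog3 (d2c a) t x1 y m)
           (homog3 (absc (d2c a)) s s s) (fun y => g t x1 y) s x2).
      + unfold s; lra.
      + unfold s; lra.
      + intros y hy. apply hs. destruct hb as [h1 [h2 h3]]. repeat split; unfold s in *; lra.
      + intros y; apply deriv2_0.
      + intros m y; apply deriv2_S.
      + intros m y hy. apply homog3_abs_le; unfold s in *; lra.
      + apply coef_d2 with rho; auto.
      + intros m y. apply cont_homog2. }
  assert (EQ : forall t x1 x2, box rho t x1 x2 -> dx2 g t x1 x2 = Series (homog3 (d2c a) t x1 x2)).
  { intros t x1 x2 hb. unfold dx2. apply is_derive_unique. apply KEY; auto. }
  split.
  - exists (d2c a). split; [apply coef_d2; auto|].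
    intros t x1 x2 hb. rewrite EQ by auto. apply Series_correct. apply KEY; auto.
  - intros t x1 x2 hb. rewrite EQ by auto. apply KEY; auto.
Qed.

Lemma pow_abs_le x s n : Rabs x <= s -> Rabs (x ^ n) <= s ^ n.
Proof.
  intros h. rewrite <- RPow_abs. apply pow_incr. split; [apply Rabs_pos|auto].
Qed.

Lemma pow_diff x y s n : Rabs x <= s -> Rabs y <= s ->
  s * Rabs (x ^ n - y ^ n) <= INR n * s ^ n * Rabs (x - y).
Proof.
  intros hx hy. assert (hs : 0 <= s) by (pose proof (Rabs_pos x); lra).
  induction n as [|n IH].
  - simpl. rewrite Rminus_diag, Rabs_R0. lra.
  - replace (x ^ S n - y ^ S n) with (x * (x ^ n - y ^ n) + (x - y) * y ^ n) by (simpl; ring).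
    pose proof (Rabs_triang (x * (x ^ n - y ^ n)) ((x - y) * y ^ n)).
    rewrite Rabs_mult in H. rewrite (Rabs_mult (x - y)) in H.
    pose proof (pow_abs_le y s n hy).
    pose proof (Rabs_pos (x ^ n - y ^ n)). pose proof (Rabs_pos (x - y)).
    pose proof (Rabs_pos x). pose proof (pos_INR n). pose proof (pow_le s n hs).
    rewrite S_INR. simpl pow.
    apply Rle_trans with (s * (Rabs x * Rabs (x ^ n - y ^ n)) + s * (Rabs (x - y) * Rabs (y ^ n))).
    { rewrite <- Rmult_plus_distr_l. apply Rmult_le_compat_l; auto. }
    apply Rle_trans with (Rabs x * (INR n * s ^ n * Rabs (x - y)) + s * (Rabs (x - y) * s ^ n)).
    { apply Rplus_le_compat.
      - replace (s * (Rabs x * Rabs (x ^ n - y ^ n))) with (Rabs x * (s * Rabs (x ^ n - y ^ n))) by ring.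
        apply Rmult_le_compat_l; auto.
      - apply Rmult_le_compat_l; auto. apply Rmult_le_compat_l; auto. }
    apply Rle_trans with (s * (INR n * s ^ n * Rabs (x - y)) + s * (Rabs (x - y) * s ^ n)).
    { apply Rplus_le_compat_r. apply Rmult_le_compat_r; auto.
      apply Rmult_le_pos; auto. apply Rmult_le_pos; auto. }
    right; ring.
Qed.

Lemma mono_diff t x y t' x' y' s d i j k :
  Rabs t <= s -> Rabs x <= s -> Rabs y <= s ->
  Rabs t' <= s -> Rabs x' <= s -> Rabs y' <= s ->
  Rabs (t - t') <= d -> Rabs (x - x') <= d -> Rabs (y - y') <= d ->
  s * Rabs (t ^ i * x ^ j * y ^ k - t' ^ i * x' ^ j * y' ^ k)
    <= INR (i + j + k) * s ^ (i + j + k) * d.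
Proof.
  intros ht hx hy ht' hx' hy' dt dx dy.
  assert (hs : 0 <= s) by (pose proof (Rabs_pos x); lra).
  replace (t ^ i * x ^ j * y ^ k - t' ^ i * x' ^ j * y' ^ k) with
    ((t ^ i - t' ^ i) * (x ^ j * y ^ k) + t' ^ i * ((x ^ j - x' ^ j) * y ^ k)
     + t' ^ i * x' ^ j * (y ^ k - y' ^ k)) by ring.
  pose proof (pow_diff t t' s i ht ht'). pose proof (pow_diff x x' s j hx hx').
  pose proof (pow_diff y y' s k hy hy').
  pose proof (pow_abs_le x s j hx). pose proof (pow_abs_le y s k hy).
  pose proof (pow_abs_le t' s i ht'). pose proof (pow_abs_le x' s j hx').
  pose proof (pow_le s i hs). pose proof (pow_le s j hs). pose proof (pow_le s k hs).
  pose proof (pos_INR i). pose proof (pos_INR j). pose proof (pos_INR k).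
  rewrite !plus_INR, !pow_add.
  set (A := Rabs (t ^ i - t' ^ i)) in *. set (B := Rabs (x ^ j - x' ^ j)) in *.
  set (C := Rabs (y ^ k - y' ^ k)) in *.
  assert (hA : 0 <= A) by apply Rabs_pos. assert (hB : 0 <= B) by apply Rabs_pos.
  assert (hC : 0 <= C) by apply Rabs_pos.
  eapply Rle_trans.
  { apply Rmult_le_compat_l; auto. eapply Rle_trans; [apply Rabs_triang|].
    apply Rplus_le_compat_r. apply Rabs_triang. }
  rewrite !Rabs_mult. fold A B C.
  set (X := Rabs (x ^ j)) in *. set (Y := Rabs (y ^ k)) in *.
  set (T' := Rabs (t' ^ i)) in *. set (X' := Rabs (x' ^ j)) in *.
  assert (0 <= X) by apply Rabs_pos. assert (0 <= Y) by apply Rabs_pos.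
  assert (0 <= T') by apply Rabs_pos. assert (0 <= X') by apply Rabs_pos.
  assert (Ed : 0 <= d) by (pose proof (Rabs_pos (x - x')); lra).
  assert (sA : s * A <= INR i * s ^ i * d).
  { eapply Rle_trans; [exact H|]. apply Rmult_le_compat_l; auto. apply Rmult_le_pos; auto. }
  assert (sB : s * B <= INR j * s ^ j * d).
  { eapply Rle_trans; [exact H0|]. apply Rmult_le_compat_l; auto. apply Rmult_le_pos; auto. }
  assert (sC : s * C <= INR k * s ^ k * d).
  { eapply Rle_trans; [exact H1|]. apply Rmult_le_compat_l; auto. apply Rmult_le_pos; auto. }
  replace (s * (A * (X * Y) + T' * (B * Y) + T' * X' * C)) with
    ((s * A) * (X * Y) + T' * ((s * B) * Y) + T' * X' * (s * C)) by ring.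
  apply Rle_trans with ((INR i * s ^ i * d) * (s ^ j * s ^ k) + s ^ i * ((INR j * s ^ j * d) * s ^ k)
     + s ^ i * s ^ j * (INR k * s ^ k * d)).
  2:{ right; ring. }
  apply Rplus_le_compat; [apply Rplus_le_compat|].
  - apply Rmult_le_compat; [apply Rmult_le_pos; auto | apply Rmult_le_pos; auto | auto | apply Rmult_le_compat; auto].
  - apply Rmult_le_compat; [auto | apply Rmult_le_pos; [apply Rmult_le_pos|]; auto | auto |
      apply Rmult_le_compat; [apply Rmult_le_pos; auto| auto | auto| auto]].
  - apply Rmult_le_compat; [apply Rmult_le_pos; auto | apply Rmult_le_pos; auto | apply Rmult_le_compat; auto | auto].
Qed.

Lemma sum_diff_bound s (u v w : nat -> R) N : 0 <= s ->
  (forall i, (i <= N)%nat -> s * Rabs (u i - v i) <= w i) ->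
  s * Rabs (sum_f_R0 u N - sum_f_R0 v N) <= sum_f_R0 w N.
Proof.
  intros hs H. induction N as [|N IH]; simpl.
  - apply H; lia.
  - replace (sum_f_R0 u N + u (S N) - (sum_f_R0 v N + v (S N))) with
      ((sum_f_R0 u N - sum_f_R0 v N) + (u (S N) - v (S N))) by ring.
    eapply Rle_trans; [apply Rmult_le_compat_l; [auto| apply Rabs_triang]|].
    rewrite Rmult_plus_distr_l. apply Rplus_le_compat.
    + apply IH; intros; apply H; lia.
    + apply H; lia.
Qed.

Lemma sum_scal_r (f : nat -> R) c N : sum_f_R0 (fun i => f i * c) N = sum_f_R0 f N * c.
Proof. rewrite <- scal_sum. ring. Qed.

Lemma sum2_scal (F : nat -> nat -> R) (m : nat -> nat) c N :
  sum_f_R0 (fun i => sum_f_R0 (fun j => F i j * c) (m i)) N =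
  c * sum_f_R0 (fun i => sum_f_R0 (F i) (m i)) N.
Proof.
  rewrite scal_sum. apply sum_eq; intros; rewrite sum_scal_r; reflexivity.
Qed.

Lemma homog_diff a t x y t' x' y' s d n :
  Rabs t <= s -> Rabs x <= s -> Rabs y <= s ->
  Rabs t' <= s -> Rabs x' <= s -> Rabs y' <= s ->
  Rabs (t - t') <= d -> Rabs (x - x') <= d -> Rabs (y - y') <= d ->
  s * Rabs (homog3 a t x y n - homog3 a t' x' y' n) <= INR n * homog3 (absc a) s s s n * d.
Proof.
  intros ht hx hy ht' hx' hy' dt dx dy.
  assert (hs : 0 <= s) by (pose proof (Rabs_pos x); lra).
  unfold homog3.
  replace (INR n * sum_f_R0 (fun i => sum_f_R0 (fun j =>
      absc a i j (n - i - j) * s ^ i * s ^ j * s ^ (n - i - j)) (n - i)) n * d)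
   with (sum_f_R0 (fun i => sum_f_R0 (fun j =>
      absc a i j (n - i - j) * s ^ i * s ^ j * s ^ (n - i - j) * (INR n * d)) (n - i)) n).
  2:{ rewrite (sum2_scal (fun i j => absc a i j (n - i - j) * s ^ i * s ^ j * s ^ (n - i - j))
        (fun i => (n - i)%nat) (INR n * d)). ring. }
  apply sum_diff_bound; auto. intros i hi.
  apply sum_diff_bound; auto. intros j hj.
  replace (a i j (n - i - j)%nat * t ^ i * x ^ j * y ^ (n - i - j) -
           a i j (n - i - j)%nat * t' ^ i * x' ^ j * y' ^ (n - i - j))
    with (a i j (n - i - j)%nat * (t ^ i * x ^ j * y ^ (n - i - j) - t' ^ i * x' ^ j * y' ^ (n - i - j)))
    by ring.
  rewrite Rabs_mult. unfold absc.
  pose proof (mono_diff t x y t' x' y' s d i j (n - i - j) ht hx hy ht' hx' hy' dt dx dy) as Hm.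
  replace (i + j + (n - i - j))%nat with n in Hm by lia.
  replace (Rabs (a i j (n - i - j)%nat) * s ^ i * s ^ j * s ^ (n - i - j) * (INR n * d))
    with (Rabs (a i j (n - i - j)%nat) * (INR n * s ^ n * d)).
  2:{ replace n with (i + j + (n - i - j))%nat at 3 by lia. rewrite !pow_add. ring. }
  replace (s * (Rabs (a i j (n - i - j)%nat) * Rabs (t ^ i * x ^ j * y ^ (n - i - j) - t' ^ i * x' ^ j * y' ^ (n - i - j))))
    with (Rabs (a i j (n - i - j)%nat) * (s * Rabs (t ^ i * x ^ j * y ^ (n - i - j) - t' ^ i * x' ^ j * y' ^ (n - i - j)))) by ring.
  apply Rmult_le_compat_l; [apply Rabs_pos|auto].
Qed.

Definition contb (rho : R) (g : fn3) (t x1 x2 : R) : Prop :=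
  forall eps, 0 < eps -> exists delta, 0 < delta /\
    forall t' y1 y2, box rho t' y1 y2 -> Rabs (t' - t) < delta -> Rabs (y1 - x1) < delta ->
      Rabs (y2 - x2) < delta -> Rabs (g t' y1 y2 - g t x1 x2) < eps.

Lemma ana_cont rho g t x1 x2 : ana rho g -> box rho t x1 x2 -> contb rho g t x1 x2.
Proof.
  intros [a [hc hs]] hb eps heps.
  pose proof (M3_box _ _ _ _ hb) as hM.
  destruct (M3_facts t x1 x2) as [f1 [f2 [f3 f4]]].
  set (M := M3 t x1 x2) in *.
  set (s := (M + rho) / 2).
  assert (hs0 : 0 < s) by (unfold s; lra).
  assert (hsr : s < rho) by (unfold s; lra).
  pose proof (coef_lip rho a s hc ltac:(lra)) as hL.
  set (L := Series (fun n => INR n * homog3 (absc a) s s s n)).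
  assert (hL0 : 0 <= L).
  { eapply Rle_trans; [|apply (series_nonneg_le _ 0)]; auto.
    - cbn [sum_f_R0]. apply Rmult_le_pos; [apply pos_INR| apply homog3_nonneg; lra].
    - intros m. apply Rmult_le_pos; [apply pos_INR| apply homog3_nonneg; lra]. }
  set (delta := Rmin ((rho - M) / 2) (eps * s / (L + 1))).
  assert (hd1 : delta <= (rho - M) / 2) by apply Rmin_l.
  assert (hd2 : delta <= eps * s / (L + 1)) by apply Rmin_r.
  assert (hdp : 0 < delta).
  { apply Rmin_pos; [lra|]. apply Rdiv_lt_0_compat; [apply Rmult_lt_0_compat|]; lra. }
  exists delta. split; auto.
  intros t' y1 y2 hb' dt d1 d2.
  assert (Rabs t' <= s).
  { replace t' with (t + (t' - t)) by ring. eapply Rle_trans; [apply Rabs_triang|]. unfold s; lra. }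
  assert (Rabs y1 <= s).
  { replace y1 with (x1 + (y1 - x1)) by ring. eapply Rle_trans; [apply Rabs_triang|]. unfold s; lra. }
  assert (Rabs y2 <= s).
  { replace y2 with (x2 + (y2 - x2)) by ring. eapply Rle_trans; [apply Rabs_triang|]. unfold s; lra. }
  pose proof (hs t' y1 y2 hb') as S1. pose proof (hs t x1 x2 hb) as S2.
  rewrite <- (is_series_unique _ _ S1), <- (is_series_unique _ _ S2).
  rewrite <- Series_minus by (eexists; eauto).
  eapply Rle_lt_trans.
  { apply (series_abs_le _ (fun n => (delta / s) * (INR n * homog3 (absc a) s s s n))).
    - intros n.
      pose proof (homog_diff a t' y1 y2 t x1 x2 s delta n) as Hd.
      assert (s * Rabs (homog3 a t' y1 y2 n - homog3 a t x1 x2 n) <=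
              INR n * homog3 (absc a) s s s n * delta) by (apply Hd; unfold s in *; lra).
      apply Rmult_le_reg_l with s; auto.
      replace (s * (delta / s * (INR n * homog3 (absc a) s s s n))) with
        (INR n * homog3 (absc a) s s s n * delta) by (field; lra). auto.
    - apply (@ex_series_scal_l R_AbsRing R_NormedModule (delta / s) _ hL). }
  rewrite Series_scal_l. fold L.
  apply Rle_lt_trans with (eps * s / (L + 1) / s * L).
  { apply Rmult_le_compat_r; auto. unfold Rdiv. apply Rmult_le_compat_r; [|auto].
    left; apply Rinv_0_lt_compat; auto. }
  replace (eps * s / (L + 1) / s * L) with (eps * (L / (L + 1))) by (field; lra).
  assert (L / (L + 1) < 1).
  { apply Rmult_lt_reg_r with (L + 1); [lra|]. unfold Rdiv. rewrite Rmult_assoc, Rinv_l by lra. lra. }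
  nra.
Qed.

Fixpoint Ck (rho : R) (k : nat) (g : fn3) : Prop :=
  (forall t x1 x2, box rho t x1 x2 -> contb rho g t x1 x2) /\
  match k with
  | O => True
  | S k' => (forall t x1 x2, box rho t x1 x2 ->
               is_derive (fun y => g t y x2) x1 (dx1 g t x1 x2) /\
               is_derive (fun y => g t x1 y) x2 (dx2 g t x1 x2)) /\
            Ck rho k' (dx1 g) /\ Ck rho k' (dx2 g)
  end.

Lemma ana_Ck rho k : forall g, ana rho g -> Ck rho k g.
Proof.
  induction k as [|k IH]; intros g ha; simpl.
  - split; auto. intros; apply ana_cont; auto.
  - destruct (ana_d1 _ _ ha) as [h1 d1]. destruct (ana_d2 _ _ ha) as [h2 d2].
    split; [intros; apply ana_cont; auto|].
    split; [intros; split; auto|]. split; apply IH; auto.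
Qed.

Lemma Ck_le rho k : forall g, Ck rho (S k) g -> Ck rho k g.
Proof.
  induction k as [|k IH]; intros g H; simpl in *.
  - split; [apply H| auto].
  - destruct H as [H0 [H1 [H2 H3]]]. split; [auto|]. split; [auto|]. split; apply IH; auto.
Qed.

Lemma Ck_cont rho k g : Ck rho k g -> forall t x1 x2, box rho t x1 x2 -> contb rho g t x1 x2.
Proof. destruct k; simpl; intros [H _]; auto. Qed.

Lemma loc_box1 rho t x1 x2 : box rho t x1 x2 -> locally x1 (fun y => box rho t y x2).
Proof.
  intros [h1 [h2 h3]].
  assert (hp : 0 < rho - Rabs x1) by lra.
  exists (mkposreal _ hp). intros y Hy.
  change (Rabs (y - x1) < rho - Rabs x1) in Hy.
  repeat split; auto.
  replace y with (x1 + (y - x1)) by ring. eapply Rle_lt_trans; [apply Rabs_triang|]. lra.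
Qed.

Lemma loc_box2 rho t x1 x2 : box rho t x1 x2 -> locally x2 (fun y => box rho t x1 y).
Proof.
  intros [h1 [h2 h3]].
  assert (hp : 0 < rho - Rabs x2) by lra.
  exists (mkposreal _ hp). intros y Hy.
  change (Rabs (y - x2) < rho - Rabs x2) in Hy.
  repeat split; auto.
  replace y with (x2 + (y - x2)) by ring. eapply Rle_lt_trans; [apply Rabs_triang|]. lra.
Qed.

Lemma dx1_ext rho (g h : fn3) : (forall t x1 x2, box rho t x1 x2 -> g t x1 x2 = h t x1 x2) ->
  forall t x1 x2, box rho t x1 x2 -> dx1 g t x1 x2 = dx1 h t x1 x2.
Proof.
  intros E t x1 x2 hb. unfold dx1. apply Derive_ext_loc.
  eapply filter_imp; [|apply (loc_box1 _ _ _ _ hb)]. intros y hy. apply E; auto.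
Qed.

Lemma dx2_ext rho (g h : fn3) : (forall t x1 x2, box rho t x1 x2 -> g t x1 x2 = h t x1 x2) ->
  forall t x1 x2, box rho t x1 x2 -> dx2 g t x1 x2 = dx2 h t x1 x2.
Proof.
  intros E t x1 x2 hb. unfold dx2. apply Derive_ext_loc.
  eapply filter_imp; [|apply (loc_box2 _ _ _ _ hb)]. intros y hy. apply E; auto.
Qed.

Lemma contb_ext rho (g h : fn3) t x1 x2 :
  (forall t x1 x2, box rho t x1 x2 -> g t x1 x2 = h t x1 x2) -> box rho t x1 x2 ->
  contb rho g t x1 x2 -> contb rho h t x1 x2.
Proof.
  intros E hb H eps heps. destruct (H eps heps) as [d [hd Hd]]. exists d; split; auto.
  intros t' y1 y2 hb' a b c. rewrite <- !E by auto. apply Hd; auto.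
Qed.

Lemma Ck_ext rho k : forall g h : fn3,
  (forall t x1 x2, box rho t x1 x2 -> g t x1 x2 = h t x1 x2) -> Ck rho k g -> Ck rho k h.
Proof.
  induction k as [|k IH]; intros g h E H; simpl in *.
  - split; auto. intros. eapply contb_ext; eauto. apply H; auto.
  - destruct H as [H0 [H1 [H2 H3]]].
    split; [intros; eapply contb_ext; eauto|].
    split; [|split].
    + intros t x1 x2 hb. destruct (H1 t x1 x2 hb) as [d1 d2]. split.
      * rewrite <- (dx1_ext rho g h E) by auto.
        eapply is_derive_ext_loc; [|exact d1].
        eapply filter_imp; [|apply (loc_box1 _ _ _ _ hb)]. intros y hy. apply E; auto.
      * rewrite <- (dx2_ext rho g h E) by auto.
        eapply is_derive_ext_loc; [|exact d2].
        eapply filter_imp; [|apply (loc_box2 _ _ _ _ hb)]. intros y hy. apply E; auto.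
    + eapply IH; [|exact H2]. apply dx1_ext; auto.
    + eapply IH; [|exact H3]. apply dx2_ext; auto.
Qed.

Lemma contb_plus rho (g h : fn3) t x1 x2 : contb rho g t x1 x2 -> contb rho h t x1 x2 ->
  contb rho (fun t x1 x2 => g t x1 x2 + h t x1 x2) t x1 x2.
Proof.
  intros Hg Hh eps heps.
  destruct (Hg (eps/2) ltac:(lra)) as [d1 [hd1 H1]].
  destruct (Hh (eps/2) ltac:(lra)) as [d2 [hd2 H2]].
  exists (Rmin d1 d2). split; [apply Rmin_pos; auto|].
  intros t' y1 y2 hb a b c.
  pose proof (Rmin_l d1 d2). pose proof (Rmin_r d1 d2).
  specialize (H1 t' y1 y2 hb ltac:(lra) ltac:(lra) ltac:(lra)).
  specialize (H2 t' y1 y2 hb ltac:(lra) ltac:(lra) ltac:(lra)).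
  replace (g t' y1 y2 + h t' y1 y2 - (g t x1 x2 + h t x1 x2)) with
    ((g t' y1 y2 - g t x1 x2) + (h t' y1 y2 - h t x1 x2)) by ring.
  eapply Rle_lt_trans; [apply Rabs_triang|]. lra.
Qed.

Lemma contb_opp rho (g : fn3) t x1 x2 : contb rho g t x1 x2 ->
  contb rho (fun t x1 x2 => - g t x1 x2) t x1 x2.
Proof.
  intros Hg eps heps. destruct (Hg eps heps) as [d [hd H]]. exists d; split; auto.
  intros. replace (- g t' y1 y2 - - g t x1 x2) with (- (g t' y1 y2 - g t x1 x2)) by ring.
  rewrite Rabs_Ropp. auto.
Qed.

Lemma contb_mult rho (g h : fn3) t x1 x2 : contb rho g t x1 x2 -> contb rho h t x1 x2 ->
  contb rho (fun t x1 x2 => g t x1 x2 * h t x1 x2) t x1 x2.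
Proof.
  intros Hg Hh eps heps.
  set (G := Rabs (g t x1 x2)). set (Hv := Rabs (h t x1 x2)).
  assert (0 <= G) by apply Rabs_pos. assert (0 <= Hv) by apply Rabs_pos.
  destruct (Hg (eps / (2 * (Hv + 1))) ltac:(apply Rdiv_lt_0_compat; lra)) as [d1 [hd1 H1]].
  destruct (Hh (Rmin 1 (eps / (2 * (G + 1)))) ltac:(apply Rmin_pos; [lra|apply Rdiv_lt_0_compat; lra])) as [d2 [hd2 H2]].
  exists (Rmin d1 d2). split; [apply Rmin_pos; auto|].
  intros t' y1 y2 hb a b c.
  pose proof (Rmin_l d1 d2). pose proof (Rmin_r d1 d2).
  specialize (H1 t' y1 y2 hb ltac:(lra) ltac:(lra) ltac:(lra)).
  specialize (H2 t' y1 y2 hb ltac:(lra) ltac:(lra) ltac:(lra)).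
  pose proof (Rmin_l 1 (eps / (2 * (G + 1)))). pose proof (Rmin_r 1 (eps / (2 * (G + 1)))).
  replace (g t' y1 y2 * h t' y1 y2 - g t x1 x2 * h t x1 x2) with
    ((g t' y1 y2 - g t x1 x2) * h t' y1 y2 + g t x1 x2 * (h t' y1 y2 - h t x1 x2)) by ring.
  eapply Rle_lt_trans; [apply Rabs_triang|]. rewrite !Rabs_mult. fold G.
  assert (Rabs (h t' y1 y2) <= Hv + 1).
  { replace (h t' y1 y2) with (h t x1 x2 + (h t' y1 y2 - h t x1 x2)) by ring.
    eapply Rle_trans; [apply Rabs_triang|]. fold Hv. lra. }
  set (A := Rabs (g t' y1 y2 - g t x1 x2)) in *.
  set (B := Rabs (h t' y1 y2 - h t x1 x2)) in *.
  assert (0 <= A) by apply Rabs_pos. assert (0 <= B) by apply Rabs_pos.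
  assert (A * Rabs (h t' y1 y2) <= eps / 2).
  { apply Rle_trans with (eps / (2 * (Hv + 1)) * (Hv + 1)).
    - apply Rmult_le_compat; auto; [apply Rabs_pos| lra].
    - right. field. lra. }
  assert (G * B < eps / 2).
  { apply Rle_lt_trans with (G * (eps / (2 * (G + 1)))).
    - apply Rmult_le_compat_l; auto. lra.
    - apply Rmult_lt_reg_r with (2 * (G + 1)); [lra|].
      replace (G * (eps / (2 * (G + 1))) * (2 * (G + 1))) with (G * eps) by (field; lra).
      nra. }
  lra.
Qed.

Lemma Ck_plus rho k : forall g h : fn3, Ck rho k g -> Ck rho k h ->
  Ck rho k (fun t x1 x2 => g t x1 x2 + h t x1 x2).
Proof.
  induction k as [|k IH]; intros g h Hg Hh; simpl in *.
  - split; auto. intros; apply contb_plus; [apply Hg|apply Hh]; auto.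
  - destruct Hg as [G0 [G1 [G2 G3]]]. destruct Hh as [H0 [H1 [H2 H3]]].
    assert (E1 : forall t x1 x2, box rho t x1 x2 ->
      dx1 g t x1 x2 + dx1 h t x1 x2 = dx1 (fun t x1 x2 => g t x1 x2 + h t x1 x2) t x1 x2).
    { intros t x1 x2 hb. symmetry. unfold dx1 at 1. apply is_derive_unique.
      apply (is_derive_plus (fun y => g t y x2) (fun y => h t y x2)); [apply G1|apply H1]; auto. }
    assert (E2 : forall t x1 x2, box rho t x1 x2 ->
      dx2 g t x1 x2 + dx2 h t x1 x2 = dx2 (fun t x1 x2 => g t x1 x2 + h t x1 x2) t x1 x2).
    { intros t x1 x2 hb. symmetry. unfold dx2 at 1. apply is_derive_unique.
      apply (is_derive_plus (fun y => g t x1 y) (fun y => h t x1 y)); [apply G1|apply H1]; auto. }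
    split; [intros; apply contb_plus; auto|].
    split; [|split].
    + intros t x1 x2 hb. split.
      * rewrite <- E1 by auto.
        apply (is_derive_plus (fun y => g t y x2) (fun y => h t y x2)); [apply G1|apply H1]; auto.
      * rewrite <- E2 by auto.
        apply (is_derive_plus (fun y => g t x1 y) (fun y => h t x1 y)); [apply G1|apply H1]; auto.
    + eapply Ck_ext; [exact E1|]. apply IH; auto.
    + eapply Ck_ext; [exact E2|]. apply IH; auto.
Qed.

Lemma Ck_opp rho k : forall g : fn3, Ck rho k g ->
  Ck rho k (fun t x1 x2 => - g t x1 x2).
Proof.
  induction k as [|k IH]; intros g Hg; simpl in *.
  - split; auto. intros; apply contb_opp; apply Hg; auto.
  - destruct Hg as [G0 [G1 [G2 G3]]].
    assert (E1 : forall t x1 x2, box rho t x1 x2 ->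
      - dx1 g t x1 x2 = dx1 (fun t x1 x2 => - g t x1 x2) t x1 x2).
    { intros t x1 x2 hb. symmetry. unfold dx1 at 1. apply is_derive_unique.
      apply (is_derive_opp (fun y => g t y x2)); apply G1; auto. }
    assert (E2 : forall t x1 x2, box rho t x1 x2 ->
      - dx2 g t x1 x2 = dx2 (fun t x1 x2 => - g t x1 x2) t x1 x2).
    { intros t x1 x2 hb. symmetry. unfold dx2 at 1. apply is_derive_unique.
      apply (is_derive_opp (fun y => g t x1 y)); apply G1; auto. }
    split; [intros; apply contb_opp; auto|].
    split; [|split].
    + intros t x1 x2 hb. split.
      * rewrite <- E1 by auto. apply (is_derive_opp (fun y => g t y x2)); apply G1; auto.
      * rewrite <- E2 by auto. apply (is_derive_opp (fun y => g t x1 y)); apply G1; auto.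
    + eapply Ck_ext; [exact E1|]. apply IH; auto.
    + eapply Ck_ext; [exact E2|]. apply IH; auto.
Qed.

Lemma Ck_mult rho k : forall g h : fn3, Ck rho k g -> Ck rho k h ->
  Ck rho k (fun t x1 x2 => g t x1 x2 * h t x1 x2).
Proof.
  induction k as [|k IH]; intros g h Hg Hh.
  - simpl in *. split; auto. intros; apply contb_mult; [apply Hg|apply Hh]; auto.
  - pose proof (Ck_le _ _ _ Hg) as Lg. pose proof (Ck_le _ _ _ Hh) as Lh.
    simpl in Hg, Hh. simpl.
    destruct Hg as [G0 [G1 [G2 G3]]]. destruct Hh as [H0 [H1 [H2 H3]]].
    assert (D1 : forall t x1 x2, box rho t x1 x2 ->
      is_derive (fun y => g t y x2 * h t y x2) x1 (dx1 g t x1 x2 * h t x1 x2 + g t x1 x2 * dx1 h t x1 x2)).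
    { intros t x1 x2 hb.
      apply (is_derive_mult (fun y => g t y x2) (fun y => h t y x2)); [apply G1|apply H1|]; auto.
      intros; apply Rmult_comm. }
    assert (D2 : forall t x1 x2, box rho t x1 x2 ->
      is_derive (fun y => g t x1 y * h t x1 y) x2 (dx2 g t x1 x2 * h t x1 x2 + g t x1 x2 * dx2 h t x1 x2)).
    { intros t x1 x2 hb.
      apply (is_derive_mult (fun y => g t x1 y) (fun y => h t x1 y)); [apply G1|apply H1|]; auto.
      intros; apply Rmult_comm. }
    assert (E1 : forall t x1 x2, box rho t x1 x2 ->
      dx1 g t x1 x2 * h t x1 x2 + g t x1 x2 * dx1 h t x1 x2 = dx1 (fun t x1 x2 => g t x1 x2 * h t x1 x2) t x1 x2).
    { intros t x1 x2 hb. symmetry. unfold dx1 at 1. apply is_derive_unique. apply D1; auto. }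
    assert (E2 : forall t x1 x2, box rho t x1 x2 ->
      dx2 g t x1 x2 * h t x1 x2 + g t x1 x2 * dx2 h t x1 x2 = dx2 (fun t x1 x2 => g t x1 x2 * h t x1 x2) t x1 x2).
    { intros t x1 x2 hb. symmetry. unfold dx2 at 1. apply is_derive_unique. apply D2; auto. }
    split; [intros; apply contb_mult; auto|].
    split; [|split].
    + intros t x1 x2 hb. split.
      * rewrite <- E1 by auto. apply D1; auto.
      * rewrite <- E2 by auto. apply D2; auto.
    + eapply Ck_ext; [exact E1|].
      apply (Ck_plus rho k (fun t x1 x2 => dx1 g t x1 x2 * h t x1 x2) (fun t x1 x2 => g t x1 x2 * dx1 h t x1 x2));
        apply IH; auto.
    + eapply Ck_ext; [exact E2|].
      apply (Ck_plus rho k (fun t x1 x2 => dx2 g t x1 x2 * h t x1 x2) (fun t x1 x2 => g t x1 x2 * dx2 h t x1 x2));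
        apply IH; auto.
Qed.

Lemma Ck_dx1 rho k g : Ck rho (S k) g -> Ck rho k (dx1 g).
Proof. simpl. tauto. Qed.
Lemma Ck_dx2 rho k g : Ck rho (S k) g -> Ck rho k (dx2 g).
Proof. simpl. tauto. Qed.

Lemma Ck_jac rho k g h : Ck rho (S k) g -> Ck rho (S k) h -> Ck rho k (jac g h).
Proof.
  intros Hg Hh. unfold jac.
  apply (Ck_plus rho k (fun t x1 x2 => dx1 g t x1 x2 * dx2 h t x1 x2)
                       (fun t x1 x2 => - (dx2 g t x1 x2 * dx1 h t x1 x2))).
  - apply (Ck_mult rho k (dx1 g) (dx2 h)); [apply Ck_dx1|apply Ck_dx2]; auto.
  - apply (Ck_opp rho k (fun t x1 x2 => dx2 g t x1 x2 * dx1 h t x1 x2)).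
    apply (Ck_mult rho k (dx2 g) (dx1 h)); [apply Ck_dx2|apply Ck_dx1]; auto.
Qed.

Lemma seg_bound a b c : Rmin a b <= c <= Rmax a b -> Rabs (c - a) <= Rabs (b - a).
Proof.
  unfold Rmin, Rmax. destruct (Rle_dec a b); intros [h1 h2];
  unfold Rabs; repeat destruct Rcase_abs; lra.
Qed.

Lemma near_box rho t p1 p2 y1 y2 : box rho t p1 p2 ->
  Rabs (y1 - p1) < rho - M3 t p1 p2 -> Rabs (y2 - p2) < rho - M3 t p1 p2 -> box rho t y1 y2.
Proof.
  intros hb h1 h2. destruct (M3_facts t p1 p2) as [f1 [f2 [f3 f4]]].
  destruct hb as [b1 [b2 b3]]. repeat split; auto.
  - replace y1 with (p1 + (y1 - p1)) by ring. eapply Rle_lt_trans; [apply Rabs_triang|]. lra.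
  - replace y2 with (p2 + (y2 - p2)) by ring. eapply Rle_lt_trans; [apply Rabs_triang|]. lra.
Qed.

Lemma frechet rho g t p1 p2 : Ck rho 1 g -> box rho t p1 p2 ->
  forall eps, 0 < eps -> exists delta, 0 < delta /\ forall q1 q2,
    Rabs (q1 - p1) < delta -> Rabs (q2 - p2) < delta ->
    Rabs (g t q1 q2 - g t p1 p2 - dx1 g t p1 p2 * (q1 - p1) - dx2 g t p1 p2 * (q2 - p2))
      <= eps * (Rabs (q1 - p1) + Rabs (q2 - p2)).
Proof.
  intros HC hb eps heps. simpl in HC. destruct HC as [_ [HD [[C1 _] [C2 _]]]].
  destruct (C1 t p1 p2 hb eps heps) as [d1 [hd1 K1]].
  destruct (C2 t p1 p2 hb eps heps) as [d2 [hd2 K2]].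
  pose proof (M3_box _ _ _ _ hb) as hM.
  set (d3 := rho - M3 t p1 p2).
  assert (hd3 : 0 < d3) by (unfold d3; lra).
  exists (Rmin d1 (Rmin d2 d3)). split; [repeat apply Rmin_pos; auto|].
  intros q1 q2 hq1 hq2.
  pose proof (Rmin_l d1 (Rmin d2 d3)). pose proof (Rmin_r d1 (Rmin d2 d3)).
  pose proof (Rmin_l d2 d3). pose proof (Rmin_r d2 d3).
  destruct (MVT_gen (fun y => g t y q2) p1 q1 (fun y => dx1 g t y q2)) as [c [hc Ec]].
  { intros x hx. apply HD. apply near_box with p1 p2; auto.
    - eapply Rle_lt_trans; [apply seg_bound; split; left; apply hx|]. fold d3. lra.
    - fold d3; lra. }
  { intros x hx. apply derivable_continuous_pt. exists (dx1 g t x q2).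
    apply is_derive_Reals. apply HD. apply near_box with p1 p2; auto.
    - eapply Rle_lt_trans; [apply seg_bound; eauto|]. fold d3. lra.
    - fold d3; lra. }
  destruct (MVT_gen (fun y => g t p1 y) p2 q2 (fun y => dx2 g t p1 y)) as [c' [hc' Ec']].
  { intros x hx. apply HD. apply near_box with p1 p2; auto.
    - rewrite Rminus_diag, Rabs_R0. fold d3; lra.
    - eapply Rle_lt_trans; [apply seg_bound; split; left; apply hx|]. fold d3. lra. }
  { intros x hx. apply derivable_continuous_pt. exists (dx2 g t p1 x).
    apply is_derive_Reals. apply HD. apply near_box with p1 p2; auto.
    - rewrite Rminus_diag, Rabs_R0. fold d3; lra.
    - eapply Rle_lt_trans; [apply seg_bound; eauto|]. fold d3. lra. }
  simpl in Ec, Ec'.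
  pose proof (seg_bound _ _ _ hc) as sc. pose proof (seg_bound _ _ _ hc') as sc'.
  assert (A1 : Rabs (dx1 g t c q2 - dx1 g t p1 p2) < eps).
  { apply K1.
    - apply near_box with p1 p2; auto; fold d3; lra.
    - rewrite Rminus_diag, Rabs_R0; auto.
    - lra.
    - lra. }
  assert (A2 : Rabs (dx2 g t p1 c' - dx2 g t p1 p2) < eps).
  { apply K2.
    - apply near_box with p1 p2; auto; [rewrite Rminus_diag, Rabs_R0|]; fold d3; lra.
    - rewrite Rminus_diag, Rabs_R0; auto.
    - rewrite Rminus_diag, Rabs_R0; auto.
    - lra. }
  replace (g t q1 q2 - g t p1 p2 - dx1 g t p1 p2 * (q1 - p1) - dx2 g t p1 p2 * (q2 - p2)) with
    ((dx1 g t c q2 - dx1 g t p1 p2) * (q1 - p1) + (dx2 g t p1 c' - dx2 g t p1 p2) * (q2 - p2)) by lra.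
  eapply Rle_trans; [apply Rabs_triang|]. rewrite !Rabs_mult.
  rewrite Rmult_plus_distr_l. apply Rplus_le_compat; apply Rmult_le_compat_r; try apply Rabs_pos; lra.
Qed.

Lemma limit1 (a s : nat -> R) :
  0 < s 0%nat -> (forall n, s (S n) = s n / 2) ->
  (forall n, a (S n) = a n - s n / 2 \/ a (S n) = a n + s n / 2) ->
  exists p, forall n, Rabs (a n - p) <= s n.
Proof.
  intros hs0 hs ha.
  assert (spos : forall n, 0 < s n).
  { induction n; auto. rewrite hs. lra. }
  set (L := fun n => a n - s n). set (U := fun n => a n + s n).
  assert (LS : forall n, L n <= L (S n)).
  { intros n. unfold L. rewrite hs. pose proof (spos n). destruct (ha n) as [E|E]; rewrite E; lra. }
  assert (US : forall n, U (S n) <= U n).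
  { intros n. unfold U. rewrite hs. pose proof (spos n). destruct (ha n) as [E|E]; rewrite E; lra. }
  assert (Lm : forall n k, L n <= L (n + k)%nat).
  { intros n k; induction k. rewrite Nat.add_0_r; lra. rewrite Nat.add_succ_r. eapply Rle_trans; eauto. }
  assert (Um : forall n k, U (n + k)%nat <= U n).
  { intros n k; induction k. rewrite Nat.add_0_r; lra. rewrite Nat.add_succ_r. eapply Rle_trans; eauto. }
  assert (LU : forall n m, L n <= U m).
  { intros n m. set (k := max n m).
    apply Rle_trans with (L k).
    { replace k with (n + (k - n))%nat by lia. apply Lm. }
    apply Rle_trans with (U k).
    { unfold L, U. pose proof (spos k). lra. }
    replace k with (m + (k - m))%nat by lia. apply Um. }
  destruct (completeness (fun x => exists n, x = L n)) as [p [Hub Hl]].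
  { exists (U 0%nat). intros x [n ->]. apply LU. }
  { exists (L 0%nat). exists 0%nat. auto. }
  exists p. intros n.
  assert (L n <= p) by (apply Hub; exists n; auto).
  assert (p <= U n) by (apply Hl; intros x [m ->]; apply LU).
  unfold L, U in *. unfold Rabs; destruct Rcase_abs; lra.
Qed.

Lemma pow2_ge n : INR n <= 2 ^ n.
Proof.
  induction n. simpl; lra. rewrite S_INR. simpl.
  assert (1 <= 2 ^ n) by (apply pow_R1_Rle; lra). lra.
Qed.

Definition quarter (P : R -> R -> R -> Prop) (x : R * R * R) : R * R * R :=
  let '(a, b, s) := x in
  if excluded_middle_informative (P (a - s/2) (b - s/2) (s/2)) then (a - s/2, b - s/2, s/2)
  else if excluded_middle_informative (P (a - s/2) (b + s/2) (s/2)) then (a - s/2, b + s/2, s/2)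
  else if excluded_middle_informative (P (a + s/2) (b - s/2) (s/2)) then (a + s/2, b - s/2, s/2)
  else (a + s/2, b + s/2, s/2).

Fixpoint sqs (P : R -> R -> R -> Prop) (x0 : R * R * R) (n : nat) : R * R * R :=
  match n with O => x0 | S n => quarter P (sqs P x0 n) end.

Lemma nested (P : R -> R -> R -> Prop) c1 c2 r : 0 < r -> P c1 c2 r ->
  (forall a b s, 0 < s -> P a b s ->
     P (a - s/2) (b - s/2) (s/2) \/ P (a - s/2) (b + s/2) (s/2) \/
     P (a + s/2) (b - s/2) (s/2) \/ P (a + s/2) (b + s/2) (s/2)) ->
  exists p1 p2, forall eps, 0 < eps -> exists a b s, 0 < s /\ P a b s /\
    Rabs (a - p1) + s < eps /\ Rabs (b - p2) + s < eps.
Proof.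
  intros hr hP hQ.
  set (A := fun n => fst (fst (sqs P (c1, c2, r) n))).
  set (B := fun n => snd (fst (sqs P (c1, c2, r) n))).
  set (S := fun n => snd (sqs P (c1, c2, r) n)).
  assert (INV : forall n, 0 < S n /\ P (A n) (B n) (S n) /\ S (Datatypes.S n) = S n / 2 /\
     (A (Datatypes.S n) = A n - S n / 2 \/ A (Datatypes.S n) = A n + S n / 2) /\
     (B (Datatypes.S n) = B n - S n / 2 \/ B (Datatypes.S n) = B n + S n / 2)).
  { intros n. unfold A, B, S. simpl.
    induction n as [|n IH].
    - simpl. split; [auto|]. split; [auto|].
      unfold quarter.
      destruct excluded_middle_informative; simpl; [split; [auto|]; split; [left|left]; auto|].
      destruct excluded_middle_informative; simpl; [split; [auto|]; split; [left|right]; auto|].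
      destruct excluded_middle_informative; simpl; [split; [auto|]; split; [right|left]; auto|].
      split; [auto|]; split; [right|right]; auto.
    - destruct IH as [h0 [h1 _]].
      simpl. destruct (sqs P (c1, c2, r) n) as [[a b] s] eqn:Hq. simpl in *.
      unfold quarter.
      destruct (hQ a b s h0 h1) as [Q|[Q|[Q|Q]]].
      all: destruct excluded_middle_informative as [e1|n1]; simpl;
        [split; [lra|]; split; [auto|];
         destruct excluded_middle_informative; simpl; [split; [auto|]; split; [left|left]; auto|];
         destruct excluded_middle_informative; simpl; [split; [auto|]; split; [left|right]; auto|];
         destruct excluded_middle_informative; simpl; [split; [auto|]; split; [right|left]; auto|];
         split; [auto|]; split; [right|right]; auto|].
      all: destruct excluded_middle_informative as [e2|n2]; simpl;
        [split; [lra|]; split; [auto|];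
         destruct excluded_middle_informative; simpl; [split; [auto|]; split; [left|left]; auto|];
         destruct excluded_middle_informative; simpl; [split; [auto|]; split; [left|right]; auto|];
         destruct excluded_middle_informative; simpl; [split; [auto|]; split; [right|left]; auto|];
         split; [auto|]; split; [right|right]; auto|].
      all: destruct excluded_middle_informative as [e3|n3]; simpl;
        [split; [lra|]; split; [auto|];
         destruct excluded_middle_informative; simpl; [split; [auto|]; split; [left|left]; auto|];
         destruct excluded_middle_informative; simpl; [split; [auto|]; split; [left|right]; auto|];
         destruct excluded_middle_informative; simpl; [split; [auto|]; split; [right|left]; auto|];
         split; [auto|]; split; [right|right]; auto|].
      all: try contradiction.
      all: split; [lra|]; split; [auto|];
         destruct excluded_middle_informative; simpl; [split; [auto|]; split; [left|left]; auto|];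
         destruct excluded_middle_informative; simpl; [split; [auto|]; split; [left|right]; auto|];
         destruct excluded_middle_informative; simpl; [split; [auto|]; split; [right|left]; auto|];
         split; [auto|]; split; [right|right]; auto. }
  destruct (limit1 A S) as [p1 Hp1].
  { apply INV. } { intros; apply INV. } { intros; apply INV. }
  destruct (limit1 B S) as [p2 Hp2].
  { apply INV. } { intros; apply INV. } { intros; apply INV. }
  exists p1, p2. intros eps heps.
  assert (SE : forall n, S n = r / 2 ^ n).
  { induction n as [|n IH]. unfold S; simpl; field.
    destruct (INV n) as [_ [_ [E _]]]. rewrite E, IH. simpl. field.
    apply pow_nonzero; lra. }
  destruct (archimed_cor1 (eps / (2 * r))) as [N [HN HN0]].
  { apply Rdiv_lt_0_compat; lra. }
  exists (A N), (B N), (S N). destruct (INV N) as [h0 [h1 _]].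
  split; [auto|]. split; [auto|].
  assert (2 * S N < eps).
  { rewrite SE. pose proof (pow2_ge N). assert (0 < INR N) by (apply lt_0_INR; lia).
    assert (0 < 2 ^ N) by (apply pow_lt; lra).
    apply Rle_lt_trans with (2 * r / INR N).
    - unfold Rdiv. rewrite Rmult_assoc. apply Rmult_le_compat_l; [lra|].
      apply Rmult_le_compat_l; [lra|]. apply Rinv_le_contravar; lra.
    - apply Rmult_lt_reg_r with (/ (2 * r)). apply Rinv_0_lt_compat; lra.
      replace (2 * r / INR N * / (2 * r)) with (/ INR N) by (field; lra). exact HN. }
  pose proof (Hp1 N). pose proof (Hp2 N). split; lra.
Qed.

Lemma inD_abs r x1 x2 : 0 <= r -> inD r x1 x2 -> Rabs x1 <= r /\ Rabs x2 <= r.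
Proof.
  unfold inD. intros hr H. simpl in H.
  split; unfold Rabs; destruct Rcase_abs; nra.
Qed.

Lemma inD_mono r r' x1 x2 : 0 <= r -> r <= r' -> inD r x1 x2 -> inD r' x1 x2.
Proof. unfold inD. simpl. intros. nra. Qed.

Lemma abs_close x p e R : Rabs (x - p) <= e -> Rabs x <= R -> 0 <= e ->
  p * p <= x * x + e * (2 * R + e).
Proof.
  intros h1 h2 he. unfold Rabs in *. repeat destruct Rcase_abs; nra.
Qed.

Lemma le_by_eps v w K : 0 <= K -> (forall e, 0 < e < 1 -> v <= w + e * K) -> v <= w.
Proof.
  intros hK H. destruct (Rle_dec v w) as [h|h]; auto. exfalso.
  set (e := Rmin (1/2) ((v - w) / (2 * (K + 1)))).
  assert (he1 : e <= 1/2) by apply Rmin_l.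
  assert (he2 : e <= (v - w) / (2 * (K + 1))) by apply Rmin_r.
  assert (hep : 0 < e) by (apply Rmin_pos; [lra| apply Rdiv_lt_0_compat; lra]).
  specialize (H e ltac:(lra)).
  assert (e * K <= (v - w) / 2).
  { apply Rle_trans with ((v - w) / (2 * (K + 1)) * K).
    - apply Rmult_le_compat_r; auto.
    - apply Rmult_le_reg_r with (2 * (K + 1)); [lra|].
      replace ((v - w) / (2 * (K + 1)) * K * (2 * (K + 1))) with ((v - w) * K) by (field; lra).
      nra. }
  lra.
Qed.

Lemma zero_by_eps v : (forall e, 0 < e -> Rabs v < e) -> v = 0.
Proof.
  intros H. destruct (Req_dec v 0) as [h|h]; auto. exfalso.
  specialize (H (Rabs v) (Rabs_pos_lt _ h)). lra.
Qed.

Lemma cramer A1 A2 B1 B2 h1 h2 e :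
  B1 * A2 - B2 * A1 <> 0 ->
  Rabs (A1 * h1 + A2 * h2) <= e * (Rabs h1 + Rabs h2) ->
  Rabs (B1 * h1 + B2 * h2) <= e * (Rabs h1 + Rabs h2) ->
  e * (Rabs A1 + Rabs A2 + Rabs B1 + Rabs B2) <= Rabs (B1 * A2 - B2 * A1) / 2 ->
  h1 = 0 /\ h2 = 0.
Proof.
  intros hk hu hv he.
  set (k := B1 * A2 - B2 * A1) in *. set (u := A1 * h1 + A2 * h2) in *.
  set (v := B1 * h1 + B2 * h2) in *. set (S := Rabs h1 + Rabs h2) in *.
  assert (E1 : k * h1 = v * A2 - u * B2) by (unfold k, u, v; ring).
  assert (E2 : k * h2 = u * B1 - v * A1) by (unfold k, u, v; ring).
  assert (hS : 0 <= S) by (unfold S; pose proof (Rabs_pos h1); pose proof (Rabs_pos h2); lra).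
  assert (R1 : Rabs k * Rabs h1 <= Rabs v * Rabs A2 + Rabs u * Rabs B2).
  { rewrite <- Rabs_mult, E1, <- !Rabs_mult. unfold Rminus. rewrite <- (Rabs_Ropp (u * B2)).
    apply Rabs_triang. }
  assert (R2 : Rabs k * Rabs h2 <= Rabs u * Rabs B1 + Rabs v * Rabs A1).
  { rewrite <- Rabs_mult, E2, <- !Rabs_mult. unfold Rminus. rewrite <- (Rabs_Ropp (v * A1)).
    apply Rabs_triang. }
  pose proof (Rabs_pos A1). pose proof (Rabs_pos A2). pose proof (Rabs_pos B1). pose proof (Rabs_pos B2).
  assert (Rabs v * Rabs A2 <= e * S * Rabs A2) by (apply Rmult_le_compat_r; auto).
  assert (Rabs u * Rabs B2 <= e * S * Rabs B2) by (apply Rmult_le_compat_r; auto).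
  assert (Rabs u * Rabs B1 <= e * S * Rabs B1) by (apply Rmult_le_compat_r; auto).
  assert (Rabs v * Rabs A1 <= e * S * Rabs A1) by (apply Rmult_le_compat_r; auto).
  assert (hkp : 0 < Rabs k) by (apply Rabs_pos_lt; auto).
  assert (Rabs k * S <= Rabs k / 2 * S).
  { unfold S at 1. rewrite Rmult_plus_distr_l.
    apply Rle_trans with (e * (Rabs A1 + Rabs A2 + Rabs B1 + Rabs B2) * S); [lra|].
    apply Rmult_le_compat_r; auto. }
  assert (S <= 0) by nra.
  pose proof (Rabs_pos h1). pose proof (Rabs_pos h2).
  assert (Rabs h1 = 0) by (unfold S in *; lra). assert (Rabs h2 = 0) by (unfold S in *; lra).
  split; apply Rabs_eq_0; auto.
Qed.

Lemma notall_pos (Q : R -> Prop) : ~ (forall d, 0 < d -> Q d) -> exists d, 0 < d /\ ~ Q d.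
Proof.
  intros H. apply NNPP. intros H'. apply H. intros d hd. apply NNPP. intros hq. apply H'.
  exists d; auto.
Qed.

Lemma closed_abs p c : (forall e, 0 < e -> exists x, Rabs (x - p) < e /\ Rabs x <= c) -> Rabs p <= c.
Proof.
  intros H. destruct (Rle_dec (Rabs p) c) as [h|h]; auto. exfalso.
  destruct (H (Rabs p - c) ltac:(lra)) as [x [h1 h2]].
  assert (Rabs p <= Rabs x + Rabs (x - p)).
  { replace p with (x + - (x - p)) at 1 by ring. eapply Rle_trans; [apply Rabs_triang|].
    rewrite Rabs_Ropp; lra. }
  lra.
Qed.

Lemma zero_lim rho g t p1 p2 : contb rho g t p1 p2 ->
  (forall e, 0 < e -> exists x1 x2, box rho t x1 x2 /\ Rabs (x1 - p1) < e /\ Rabs (x2 - p2) < e /\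
      g t x1 x2 = 0) -> g t p1 p2 = 0.
Proof.
  intros Hc H. apply zero_by_eps. intros eta heta.
  destruct (Hc eta heta) as [d [hd Hd]].
  destruct (H d hd) as [x1 [x2 [hb [h1 [h2 h3]]]]].
  specialize (Hd t x1 x2 hb). rewrite Rminus_diag, Rabs_R0 in Hd.
  specialize (Hd hd h1 h2). rewrite h3 in Hd. rewrite Rminus_0_l, Rabs_Ropp in Hd. auto.
Qed.

Lemma isolation rh (Jf Ff : fn3) t p1 p2 (S : R -> R -> Prop) :
  Ck rh 1 Jf -> Ck rh 1 Ff -> box rh t p1 p2 -> jac Ff Jf t p1 p2 <> 0 ->
  Jf t p1 p2 = 0 -> Ff t p1 p2 = 0 ->
  (forall x1 x2, S x1 x2 -> Jf t x1 x2 = 0 /\ Ff t x1 x2 = 0) ->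
  (forall e, 0 < e -> exists x1 x2, S x1 x2 /\ (x1 <> p1 \/ x2 <> p2) /\
      Rabs (x1 - p1) < e /\ Rabs (x2 - p2) < e) -> False.
Proof.
  intros CJ CF hb hk hJ hF HS ACC.
  unfold jac in hk.
  set (A1 := dx1 Jf t p1 p2) in *. set (A2 := dx2 Jf t p1 p2) in *.
  set (B1 := dx1 Ff t p1 p2) in *. set (B2 := dx2 Ff t p1 p2) in *.
  set (M := Rabs A1 + Rabs A2 + Rabs B1 + Rabs B2).
  assert (hM : 0 <= M) by (unfold M; pose proof (Rabs_pos A1); pose proof (Rabs_pos A2);
    pose proof (Rabs_pos B1); pose proof (Rabs_pos B2); lra).
  assert (hkp : 0 < Rabs (B1 * A2 - B2 * A1)) by (apply Rabs_pos_lt; auto).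
  set (e := Rabs (B1 * A2 - B2 * A1) / (2 * (M + 1))).
  assert (he : 0 < e) by (unfold e; apply Rdiv_lt_0_compat; lra).
  destruct (frechet rh Jf t p1 p2 CJ hb e he) as [d1 [hd1 K1]].
  destruct (frechet rh Ff t p1 p2 CF hb e he) as [d2 [hd2 K2]].
  destruct (ACC (Rmin d1 d2) (Rmin_pos _ _ hd1 hd2)) as [x1 [x2 [hS [hne [h1 h2]]]]].
  pose proof (Rmin_l d1 d2). pose proof (Rmin_r d1 d2).
  specialize (K1 x1 x2 ltac:(lra) ltac:(lra)). specialize (K2 x1 x2 ltac:(lra) ltac:(lra)).
  destruct (HS x1 x2 hS) as [z1 z2].
  rewrite z1, hJ in K1. rewrite z2, hF in K2. fold A1 A2 in K1. fold B1 B2 in K2.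
  replace (0 - 0 - A1 * (x1 - p1) - A2 * (x2 - p2)) with (- (A1 * (x1 - p1) + A2 * (x2 - p2))) in K1 by ring.
  replace (0 - 0 - B1 * (x1 - p1) - B2 * (x2 - p2)) with (- (B1 * (x1 - p1) + B2 * (x2 - p2))) in K2 by ring.
  rewrite Rabs_Ropp in K1, K2.
  destruct (cramer A1 A2 B1 B2 (x1 - p1) (x2 - p2) e hk K1 K2) as [q1 q2].
  - fold M. unfold e. apply Rle_trans with (Rabs (B1 * A2 - B2 * A1) / (2 * (M + 1)) * (M + 1)).
    + apply Rmult_le_compat_l; [left; exact he|lra].
    + right; field; lra.
  - destruct hne as [n|n]; apply n; lra.
Qed.

Theorem lemma6p3 (f1 f2 : R -> R -> R -> R) :
  analytic0 f1 -> analytic0 f2 ->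
  f1 0 0 0 = 0 -> f2 0 0 0 = 0 ->
  let J := jac f1 f2 in
  let F1 := jac f1 J in
  let F2 := jac f2 J in
  finite_codim (tcoord :: f1 :: f2 :: nil) ->
  finite_codim (tcoord :: F1 :: F2 :: nil) ->
  J 0 0 0 = 0 ->
  finite_codim (tcoord :: dx1 J :: dx2 J :: nil) ->
  (* V(I') = {0} as germs *)
  near0 (fun t x1 x2 =>
    (J t x1 x2 = 0 /\ F1 t x1 x2 = 0 /\ F2 t x1 x2 = 0 /\
     jac F1 J t x1 x2 = 0 /\ jac F2 J t x1 x2 = 0)
    <-> (t = 0 /\ x1 = 0 /\ x2 = 0)) ->
  exists rho, 0 < rho /\
  forall r0, 0 < r0 -> r0 < rho ->
  (forall x1 x2, inD r0 x1 x2 -> f1 0 x1 x2 = 0 -> f2 0 x1 x2 = 0 ->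
     x1 = 0 /\ x2 = 0) ->
  forall VI : R -> R -> R -> Prop,
  (* VI is a representative of the zero-set germ V(I), I = <J,F1,F2> *)
  near0 (fun t x1 x2 =>
    VI t x1 x2 <-> (J t x1 x2 = 0 /\ F1 t x1 x2 = 0 /\ F2 t x1 x2 = 0)) ->
  exists delta0, 0 < delta0 /\
  forall delta, 0 < delta -> delta < delta0 ->
  exists tau, 0 < tau /\
  forall t, t <> 0 -> Rabs t < tau ->
    let Dt := fun x1 x2 => inD r0 x1 x2 /\ inD delta (f1 t x1 x2) (f2 t x1 x2) in
    let Sigma := fun x1 x2 => Dt x1 x2 /\ VI t x1 x2 in
    (forall x1 x2, Dt x1 x2 -> critical_pt (f1 t) (f2 t) x1 x2 ->
       fold_pt (f1 t) (f2 t) x1 x2 \/ Sigma x1 x2) /\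
    (forall x1 x2, Sigma x1 x2 -> cusp_pt (f1 t) (f2 t) x1 x2) /\
    (exists l : list (R * R), forall x1 x2, Sigma x1 x2 -> In (x1, x2) l).
Proof.
  intros hf1 hf2 h10 h20 J F1 F2 cod1 cod2 hJ0 cod3 HV'.
  destruct (analytic0_ana f1 hf1) as [r1 [hr1 A1]].
  destruct (analytic0_ana f2 hf2) as [r2 [hr2 A2]].
  set (rh := Rmin r1 r2).
  assert (hrh : 0 < rh) by (apply Rmin_pos; auto).
  assert (B1 : ana rh f1) by (apply ana_mono with r1; [split; [auto| apply Rmin_l]| auto]).
  assert (B2 : ana rh f2) by (apply ana_mono with r2; [split; [auto| apply Rmin_r]| auto]).
  assert (C1 : Ck rh 4 f1) by (apply ana_Ck; auto).
  assert (C2 : Ck rh 4 f2) by (apply ana_Ck; auto).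
  assert (CJ : Ck rh 3 J) by (apply Ck_jac; auto).
  assert (CF1 : Ck rh 1 F1) by (apply Ck_jac; [do 2 apply Ck_le; auto | apply Ck_le; auto]).
  assert (CF2 : Ck rh 1 F2) by (apply Ck_jac; [do 2 apply Ck_le; auto | apply Ck_le; auto]).
  assert (CJ1 : Ck rh 1 J) by (do 2 apply Ck_le; auto).
  destruct HV' as [e1 [he1 HV']].
  set (rho := Rmin rh e1).
  exists rho. split; [apply Rmin_pos; auto|].
  intros r0 hr0 hr0r hzero VI [e2 [he2 HVI]].
  assert (rrh : r0 < rh) by (pose proof (Rmin_l rh e1); unfold rho in *; lra).
  assert (re1 : r0 < e1) by (pose proof (Rmin_r rh e1); unfold rho in *; lra).
  set (e3 := Rmin e2 r0 / 2).
  assert (he3 : 0 < e3) by (unfold e3; pose proof (Rmin_pos e2 r0 he2 hr0); lra).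
  assert (e3e2 : e3 < e2) by (unfold e3; pose proof (Rmin_l e2 r0); lra).
  assert (e3r0 : e3 < r0) by (unfold e3; pose proof (Rmin_r e2 r0); lra).
  assert (CONC : exists d0, 0 < d0 /\ forall t x1 x2, Rabs t < d0 -> inD r0 x1 x2 ->
           inD d0 (f1 t x1 x2) (f2 t x1 x2) -> Rabs x1 <= e3 /\ Rabs x2 <= e3).
  { apply NNPP; intro Hno.
    set (P := fun a b s => forall d, 0 < d -> exists t x1 x2, Rabs t < d /\ inD r0 x1 x2 /\
        inD d (f1 t x1 x2) (f2 t x1 x2) /\ ~ (Rabs x1 <= e3 /\ Rabs x2 <= e3) /\
        Rabs (x1 - a) <= s /\ Rabs (x2 - b) <= s).
    assert (P0 : P 0 0 r0).
    { intros d hd. apply NNPP; intro Hn. apply Hno. exists d; split; auto.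
      intros t x1 x2 ht hx hf. apply NNPP; intro Hc. apply Hn.
      exists t, x1, x2. destruct (inD_abs r0 x1 x2 ltac:(lra) hx).
      rewrite !Rminus_0_r. repeat split; auto. }
    assert (PQ : forall a b s, 0 < s -> P a b s ->
       P (a - s/2) (b - s/2) (s/2) \/ P (a - s/2) (b + s/2) (s/2) \/
       P (a + s/2) (b - s/2) (s/2) \/ P (a + s/2) (b + s/2) (s/2)).
    { intros a b s hs hP. apply NNPP; intro Hn.
      apply not_or_and in Hn; destruct Hn as [n1 Hn].
      apply not_or_and in Hn; destruct Hn as [n2 Hn].
      apply not_or_and in Hn; destruct Hn as [n3 n4].
      destruct (notall_pos _ n1) as [d1 [hd1 m1]].
      destruct (notall_pos _ n2) as [d2 [hd2 m2]].
      destruct (notall_pos _ n3) as [d3 [hd3 m3]].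
      destruct (notall_pos _ n4) as [d4 [hd4 m4]].
      set (d := Rmin (Rmin d1 d2) (Rmin d3 d4)).
      assert (hd : 0 < d) by (unfold d; repeat apply Rmin_pos; auto).
      assert (l1 : d <= d1) by (unfold d; pose proof (Rmin_l (Rmin d1 d2) (Rmin d3 d4)); pose proof (Rmin_l d1 d2); lra).
      assert (l2 : d <= d2) by (unfold d; pose proof (Rmin_l (Rmin d1 d2) (Rmin d3 d4)); pose proof (Rmin_r d1 d2); lra).
      assert (l3 : d <= d3) by (unfold d; pose proof (Rmin_r (Rmin d1 d2) (Rmin d3 d4)); pose proof (Rmin_l d3 d4); lra).
      assert (l4 : d <= d4) by (unfold d; pose proof (Rmin_r (Rmin d1 d2) (Rmin d3 d4)); pose proof (Rmin_r d3 d4); lra).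
      destruct (hP d hd) as [t [x1 [x2 [ht [hx [hf [hout [ha hb]]]]]]]].
      destruct (Rle_dec x1 a) as [c1|c1]; destruct (Rle_dec x2 b) as [c2|c2].
      - apply m1. exists t, x1, x2. repeat split; auto; try lra.
        + apply inD_mono with d; auto; lra.
        + revert ha c1; unfold Rabs; repeat destruct Rcase_abs; lra.
        + revert hb c2; unfold Rabs; repeat destruct Rcase_abs; lra.
      - apply m2. exists t, x1, x2. repeat split; auto; try lra.
        + apply inD_mono with d; auto; lra.
        + revert ha c1; unfold Rabs; repeat destruct Rcase_abs; lra.
        + revert hb c2; unfold Rabs; repeat destruct Rcase_abs; lra.
      - apply m3. exists t, x1, x2. repeat split; auto; try lra.
        + apply inD_mono with d; auto; lra.
        + revert ha c1; unfold Rabs; repeat destruct Rcase_abs; lra.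
        + revert hb c2; unfold Rabs; repeat destruct Rcase_abs; lra.
      - apply m4. exists t, x1, x2. repeat split; auto; try lra.
        + apply inD_mono with d; auto; lra.
        + revert ha c1; unfold Rabs; repeat destruct Rcase_abs; lra.
        + revert hb c2; unfold Rabs; repeat destruct Rcase_abs; lra. }
    destruct (nested P 0 0 r0 hr0 P0 PQ) as [p1 [p2 Hp]].
    assert (ACC : forall eps d, 0 < eps -> 0 < d -> exists t x1 x2, Rabs t < d /\ inD r0 x1 x2 /\
        inD d (f1 t x1 x2) (f2 t x1 x2) /\ ~ (Rabs x1 <= e3 /\ Rabs x2 <= e3) /\
        Rabs (x1 - p1) < eps /\ Rabs (x2 - p2) < eps).
    { intros eps d he hd. destruct (Hp eps he) as [a [b [s [hs [hP [ha hb]]]]]].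
      destruct (hP d hd) as [t [x1 [x2 [h1 [h2 [h3 [h4 [h5 h6]]]]]]]].
      exists t, x1, x2. repeat split; auto.
      - replace (x1 - p1) with ((x1 - a) + (a - p1)) by ring.
        eapply Rle_lt_trans; [apply Rabs_triang|]. lra.
      - replace (x2 - p2) with ((x2 - b) + (b - p2)) by ring.
        eapply Rle_lt_trans; [apply Rabs_triang|]. lra. }
    assert (PD : inD r0 p1 p2).
    { unfold inD. simpl. apply le_by_eps with (K := 4 * r0 + 2); [lra|].
      intros e he. destruct (ACC e 1 ltac:(lra) ltac:(lra)) as [t [x1 [x2 [_ [hx [_ [_ [h1 h2]]]]]]]].
      destruct (inD_abs r0 x1 x2 ltac:(lra) hx) as [a1 a2].
      pose proof (abs_close x1 p1 e r0 ltac:(lra) a1 ltac:(lra)).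
      pose proof (abs_close x2 p2 e r0 ltac:(lra) a2 ltac:(lra)).
      unfold inD in hx; simpl in hx. nra. }
    assert (POUT : ~ (Rabs p1 < e3 /\ Rabs p2 < e3)).
    { intros [a1 a2]. set (eps := Rmin (e3 - Rabs p1) (e3 - Rabs p2)).
      assert (hep : 0 < eps) by (unfold eps; apply Rmin_pos; lra).
      destruct (ACC eps 1 hep ltac:(lra)) as [t [x1 [x2 [_ [_ [_ [hout [h1 h2]]]]]]]].
      pose proof (Rmin_l (e3 - Rabs p1) (e3 - Rabs p2)). pose proof (Rmin_r (e3 - Rabs p1) (e3 - Rabs p2)).
      apply hout. split.
      - replace x1 with (p1 + (x1 - p1)) by ring. eapply Rle_trans; [apply Rabs_triang|].
        unfold eps in *; lra.
      - replace x2 with (p2 + (x2 - p2)) by ring. eapply Rle_trans; [apply Rabs_triang|].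
        unfold eps in *; lra. }
    destruct (inD_abs r0 p1 p2 ltac:(lra) PD) as [pa1 pa2].
    assert (hb0 : box rh 0 p1 p2) by (repeat split; rewrite ?Rabs_R0; lra).
    pose proof (Ck_cont _ _ _ C1 0 p1 p2 hb0) as K1.
    pose proof (Ck_cont _ _ _ C2 0 p1 p2 hb0) as K2.
    assert (Z : forall g, (g = f1 \/ g = f2) -> contb rh g 0 p1 p2 -> g 0 p1 p2 = 0).
    { intros g hg Kg. apply zero_by_eps. intros eta heta.
      destruct (Kg (eta/2) ltac:(lra)) as [dl [hdl Hdl]].
      set (m := Rmin dl (Rmin (eta/2) (rh - r0))).
      assert (hm : 0 < m) by (unfold m; repeat apply Rmin_pos; lra).
      assert (m1 : m <= dl) by apply Rmin_l.
      assert (m2 : m <= eta / 2) by (unfold m; pose proof (Rmin_r dl (Rmin (eta/2) (rh - r0))); pose proof (Rmin_l (eta/2) (rh - r0)); lra).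
      assert (m3 : m <= rh - r0) by (unfold m; pose proof (Rmin_r dl (Rmin (eta/2) (rh - r0))); pose proof (Rmin_r (eta/2) (rh - r0)); lra).
      destruct (ACC m m hm hm) as [t [x1 [x2 [ht [hx [hf [_ [h1 h2]]]]]]]].
      destruct (inD_abs m (f1 t x1 x2) (f2 t x1 x2) ltac:(lra) hf) as [g1 g2].
      destruct (inD_abs r0 x1 x2 ltac:(lra) hx) as [q1 q2].
      assert (hbx : box rh t x1 x2) by (repeat split; lra).
      specialize (Hdl t x1 x2 hbx ltac:(rewrite Rminus_0_r; lra) ltac:(lra) ltac:(lra)).
      assert (Rabs (g t x1 x2) <= m) by (destruct hg; subst g; auto).
      replace (g 0 p1 p2) with (g t x1 x2 - (g t x1 x2 - g 0 p1 p2)) by ring.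
      eapply Rle_lt_trans; [apply Rabs_triang|]. rewrite Rabs_Ropp. lra. }
    destruct (hzero p1 p2 PD (Z f1 (or_introl eq_refl) K1) (Z f2 (or_intror eq_refl) K2)) as [z1 z2].
    apply POUT. rewrite z1, z2, Rabs_R0. lra. }
  destruct CONC as [d0 [hd0 CONC]].
  exists d0. split; auto.
  intros delta hdel hdeld.
  set (tau := Rmin d0 (Rmin e1 (Rmin e2 rh))).
  exists tau. split; [repeat apply Rmin_pos; auto|].
  intros t ht0 htau Dt Sigma.
  assert (t1 : Rabs t < d0) by (pose proof (Rmin_l d0 (Rmin e1 (Rmin e2 rh))); unfold tau in *; lra).
  assert (t2 : Rabs t < e1) by (pose proof (Rmin_r d0 (Rmin e1 (Rmin e2 rh)));
     pose proof (Rmin_l e1 (Rmin e2 rh)); unfold tau in *; lra).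
  assert (t3 : Rabs t < e2) by (pose proof (Rmin_r d0 (Rmin e1 (Rmin e2 rh)));
     pose proof (Rmin_r e1 (Rmin e2 rh)); pose proof (Rmin_l e2 rh); unfold tau in *; lra).
  assert (t4 : Rabs t < rh) by (pose proof (Rmin_r d0 (Rmin e1 (Rmin e2 rh)));
     pose proof (Rmin_r e1 (Rmin e2 rh)); pose proof (Rmin_r e2 rh); unfold tau in *; lra).
  assert (DX : forall x1 x2, Dt x1 x2 ->
     Rabs x1 <= e3 /\ Rabs x2 <= e3 /\ Rabs x1 <= r0 /\ Rabs x2 <= r0).
  { intros x1 x2 [hx hf].
    destruct (CONC t x1 x2 t1 hx (inD_mono delta d0 _ _ ltac:(lra) ltac:(lra) hf)).
    destruct (inD_abs r0 x1 x2 ltac:(lra) hx). repeat split; auto. }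
  assert (VIeq : forall x1 x2, Dt x1 x2 ->
     (VI t x1 x2 <-> (J t x1 x2 = 0 /\ F1 t x1 x2 = 0 /\ F2 t x1 x2 = 0))).
  { intros x1 x2 hD. destruct (DX x1 x2 hD) as [a1 [a2 _]]. apply HVI; lra. }
  assert (V' : forall x1 x2, Rabs x1 < e1 -> Rabs x2 < e1 -> J t x1 x2 = 0 -> F1 t x1 x2 = 0 ->
     F2 t x1 x2 = 0 -> ~ (jac F1 J t x1 x2 = 0 /\ jac F2 J t x1 x2 = 0)).
  { intros x1 x2 a b c d e [f g]. destruct (HV' t x1 x2 t2 a b) as [HH _].
    destruct (HH (conj c (conj d (conj e (conj f g))))) as [ht _]. contradiction. }
  split; [|split].
  - intros x1 x2 HD Hcrit. change (J t x1 x2 = 0) in Hcrit.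
    destruct (classic (VI t x1 x2)) as [Hv|Hv]; [right; split; auto|left].
    assert (NF : ~ (F1 t x1 x2 = 0 /\ F2 t x1 x2 = 0)).
    { intros [a b]. apply Hv. apply VIeq; auto. }
    split; [split; [exact Hcrit|]|].
    + intros [a b]. apply NF. change (dx1 J t x1 x2 = 0) in a. change (dx2 J t x1 x2 = 0) in b.
      unfold F1, F2, jac. rewrite a, b. split; ring.
    + exact NF.
  - intros x1 x2 [HD Hv]. apply VIeq in Hv; auto. destruct Hv as [hJ [hF1 hF2]].
    destruct (DX x1 x2 HD) as [a1 [a2 [a3 a4]]].
    assert (NV := V' x1 x2 ltac:(lra) ltac:(lra) hJ hF1 hF2).
    split; [split; [exact hJ|]|split; [exact hF1|split; [exact hF2|exact NV]]].
    intros [a b]. apply NV. change (dx1 J t x1 x2 = 0) in a. change (dx2 J t x1 x2 = 0) in b.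
    unfold jac. rewrite a, b. split; ring.
  - apply NNPP; intro Hno.
    assert (SD : forall x1 x2, Sigma x1 x2 -> Dt x1 x2) by (intros x1 x2 [h _]; exact h).
    set (P := fun a b s => ~ exists l : list (R * R), forall x1 x2, Sigma x1 x2 ->
        Rabs (x1 - a) <= s -> Rabs (x2 - b) <= s -> In (x1, x2) l).
    assert (P0 : P 0 0 r0).
    { intros [l Hl]. apply Hno. exists l. intros x1 x2 hs.
      destruct (DX x1 x2 (SD _ _ hs)) as [_ [_ [a3 a4]]].
      apply Hl; auto; rewrite Rminus_0_r; auto. }
    assert (PQ : forall a b s, 0 < s -> P a b s ->
       P (a - s/2) (b - s/2) (s/2) \/ P (a - s/2) (b + s/2) (s/2) \/
       P (a + s/2) (b - s/2) (s/2) \/ P (a + s/2) (b + s/2) (s/2)).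
    { intros a b s hs hP. apply NNPP; intro Hn. apply hP.
      apply not_or_and in Hn; destruct Hn as [n1 Hn].
      apply not_or_and in Hn; destruct Hn as [n2 Hn].
      apply not_or_and in Hn; destruct Hn as [n3 n4].
      apply NNPP in n1. apply NNPP in n2. apply NNPP in n3. apply NNPP in n4.
      destruct n1 as [l1 L1]. destruct n2 as [l2 L2]. destruct n3 as [l3 L3]. destruct n4 as [l4 L4].
      exists (l1 ++ l2 ++ l3 ++ l4). intros x1 x2 hS ha hb.
      destruct (Rle_dec x1 a) as [c1|c1]; destruct (Rle_dec x2 b) as [c2|c2].
      - apply in_or_app. left. apply L1; auto.
        + revert ha c1; unfold Rabs; repeat destruct Rcase_abs; lra.
        + revert hb c2; unfold Rabs; repeat destruct Rcase_abs; lra.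
      - apply in_or_app. right. apply in_or_app. left. apply L2; auto.
        + revert ha c1; unfold Rabs; repeat destruct Rcase_abs; lra.
        + revert hb c2; unfold Rabs; repeat destruct Rcase_abs; lra.
      - apply in_or_app. right. apply in_or_app. right. apply in_or_app. left. apply L3; auto.
        + revert ha c1; unfold Rabs; repeat destruct Rcase_abs; lra.
        + revert hb c2; unfold Rabs; repeat destruct Rcase_abs; lra.
      - apply in_or_app. right. apply in_or_app. right. apply in_or_app. right. apply L4; auto.
        + revert ha c1; unfold Rabs; repeat destruct Rcase_abs; lra.
        + revert hb c2; unfold Rabs; repeat destruct Rcase_abs; lra. }
    destruct (nested P 0 0 r0 hr0 P0 PQ) as [p1 [p2 Hp]].
    assert (ACC : forall eps, 0 < eps -> exists x1 x2, Sigma x1 x2 /\ (x1 <> p1 \/ x2 <> p2) /\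
        Rabs (x1 - p1) < eps /\ Rabs (x2 - p2) < eps).
    { intros eps he. destruct (Hp eps he) as [a [b [s [hs [hP [ha hb]]]]]].
      apply NNPP; intro Hn. apply hP. exists ((p1, p2) :: nil). intros x1 x2 hS h1 h2.
      left. apply NNPP; intro Hne. apply Hn. exists x1, x2. split; [auto|]. split.
      - destruct (Req_dec x1 p1) as [e1'|e1']; [|left; auto].
        destruct (Req_dec x2 p2) as [e2'|e2']; [|right; auto].
        exfalso; apply Hne; subst; auto.
      - split.
        + replace (x1 - p1) with ((x1 - a) + (a - p1)) by ring.
          eapply Rle_lt_trans; [apply Rabs_triang|]. lra.
        + replace (x2 - p2) with ((x2 - b) + (b - p2)) by ring.
          eapply Rle_lt_trans; [apply Rabs_triang|]. lra. }
    assert (pb1 : Rabs p1 <= e3).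
    { apply closed_abs. intros e he. destruct (ACC e he) as [x1 [x2 [hS [_ [h1 h2]]]]].
      exists x1. split; auto. apply (DX x1 x2 (SD _ _ hS)). }
    assert (pb2 : Rabs p2 <= e3).
    { apply closed_abs. intros e he. destruct (ACC e he) as [x1 [x2 [hS [_ [h1 h2]]]]].
      exists x2. split; auto. apply (DX x1 x2 (SD _ _ hS)). }
    assert (hbp : box rh t p1 p2) by (repeat split; lra).
    assert (ZS : forall x1 x2, Sigma x1 x2 -> box rh t x1 x2 /\
        J t x1 x2 = 0 /\ F1 t x1 x2 = 0 /\ F2 t x1 x2 = 0).
    { intros x1 x2 hS. destruct (DX x1 x2 (SD _ _ hS)) as [_ [_ [a3 a4]]].
      split; [repeat split; lra|]. apply VIeq; [apply SD; auto| apply hS]. }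
    assert (ZL : forall g, (forall x1 x2, Sigma x1 x2 -> g t x1 x2 = 0) -> contb rh g t p1 p2 ->
        g t p1 p2 = 0).
    { intros g hg Kg. apply zero_lim with rh; auto. intros e he.
      destruct (ACC e he) as [x1 [x2 [hS [_ [h1 h2]]]]]. exists x1, x2.
      split; [apply ZS; auto|]. split; auto. }
    assert (Jp : J t p1 p2 = 0).
    { apply ZL; [intros x1 x2 hS; apply ZS; auto| apply (Ck_cont _ _ _ CJ); auto]. }
    assert (F1p : F1 t p1 p2 = 0).
    { apply ZL; [intros x1 x2 hS; apply ZS; auto| apply (Ck_cont _ _ _ CF1); auto]. }
    assert (F2p : F2 t p1 p2 = 0).
    { apply ZL; [intros x1 x2 hS; apply ZS; auto| apply (Ck_cont _ _ _ CF2); auto]. }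
    pose proof (V' p1 p2 ltac:(lra) ltac:(lra) Jp F1p F2p) as NV.
    destruct (Req_dec (jac F1 J t p1 p2) 0) as [k1|k1].
    + assert (k2 : jac F2 J t p1 p2 <> 0) by (intro k2; apply NV; auto).
      apply (isolation rh J F2 t p1 p2 Sigma CJ1 CF2 hbp k2 Jp F2p); auto.
      intros x1 x2 hS. destruct (ZS x1 x2 hS) as [_ [z1 [_ z3]]]. auto.
    + apply (isolation rh J F1 t p1 p2 Sigma CJ1 CF1 hbp k1 Jp F1p); auto.
      intros x1 x2 hS. destruct (ZS x1 x2 hS) as [_ [z1 [z2 _]]]. auto.
Qed.
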